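(* Let $F=(X,Y,Z)\colon\mathbb{D}_1\to\mathbb{C}^3$ be a bounded null holomorphic immersion with complete induced metric such that $1<|X|<2$ and $|Y|<1/3$ on $\mathbb{D}_1$. Let $W(z):=-\int_0^z Y\,dX$ and $$\mathcal{L}:=\begin{pmatrix}e^{-W}&Ye^{W}\\ Xe^{-W}&(1+XY)e^{W}\end{pmatrix},$$ so that $\mathcal{L}^{-1}d\mathcal{L}=\begin{pmatrix}0&\theta\\ \omega&0\end{pmatrix}$ with $\omega=e^{-2W}dX$, $\theta=e^{2W}(dY-Y^2dX)$. Then the metric $ds^2_{\mathcal L}=|\omega|^2+|\theta|^2$ is complete on $\mathbb{D}_1$; i.e., the flat front $f=\mathcal{L}\mathcal{L}^*\colon\mathbb{D}_1\to H^3$ is weakly complete.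
   Context: $\mathbb{D}_1$ is the open unit disk; null means $F_z\cdot F_z\equiv 0$ for the complex bilinear dot product on $\mathbb{C}^3$. $H^3=\{aa^*: a\in\mathrm{SL}(2,\mathbb{C})\}$. A flat front $f=\mathcal{L}\mathcal{L}^*$ with holomorphic Legendrian lift $\mathcal{L}$ is weakly complete if $|\omega|^2+|\theta|^2$ is a complete Riemannian metric on $\mathbb{D}_1$. *)

(* Defs.v *)
From Stdlib Require Import Reals Lra.
Open Scope R_scope.

Definition Cpx : Type := (R * R)%type.
Definition Cre (z : Cpx) : R := fst z.
Definition Cim (z : Cpx) : R := snd z.
Definition Cof (x : R) : Cpx := (x, 0).
Definition C0 : Cpx := (0, 0).
Definition C1 : Cpx := (1, 0).
Definition Cadd (z w : Cpx) : Cpx := (fst z + fst w, snd z + snd w).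
Definition Copp (z : Cpx) : Cpx := (- fst z, - snd z).
Definition Csub (z w : Cpx) : Cpx := Cadd z (Copp w).
Definition Cmul (z w : Cpx) : Cpx :=
  (fst z * fst w - snd z * snd w, fst z * snd w + snd z * fst w).
Definition Cnorm2 (z : Cpx) : R := fst z * fst z + snd z * snd z.
Definition Cinv (z : Cpx) : Cpx := (fst z / Cnorm2 z, - snd z / Cnorm2 z).
Definition Cdiv (z w : Cpx) : Cpx := Cmul z (Cinv w).
Definition Cmod (z : Cpx) : R := sqrt (Cnorm2 z).
Definition Cexp (z : Cpx) : Cpx := (exp (fst z) * cos (snd z), exp (fst z) * sin (snd z)).

Definition in_disk (z : Cpx) : Prop := Cmod z < 1.

Definition has_cderiv (f : Cpx -> Cpx) (z l : Cpx) : Prop :=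
  forall eps : R, 0 < eps -> exists delta : R, 0 < delta /\
    forall h : Cpx, h <> C0 -> Cmod h < delta ->
      Cmod (Csub (Cdiv (Csub (f (Cadd z h)) (f z)) h) l) < eps.

Definition holo_on_disk (f f' : Cpx -> Cpx) : Prop :=
  forall z : Cpx, in_disk z -> has_cderiv f z (f' z).

(** A divergent Cpx^1 path in D_1: gamma : [0,1) -> D_1, continuously
    differentiable (derivative gamma'), with |gamma(t)| -> 1 as t -> 1^-
    (i.e. gamma eventually leaves every compact subset of D_1). *)
Definition divergent_path (gamma gamma' : R -> Cpx) : Prop :=
  (forall t, 0 <= t < 1 -> in_disk (gamma t)) /\
  (forall t, 0 <= t < 1 ->
     derivable_pt_lim (fun s => fst (gamma s)) t (fst (gamma' t)) /\
     derivable_pt_lim (fun s => snd (gamma s)) t (snd (gamma' t)) /\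
     continuity_pt (fun s => fst (gamma' s)) t /\
     continuity_pt (fun s => snd (gamma' s)) t) /\
  (forall eps, 0 < eps -> exists t0, 0 <= t0 < 1 /\
     forall t, t0 <= t < 1 -> 1 - eps < Cmod (gamma t)).

(** A conformal metric ds = rho |dz| on D_1 (rho >= 0 continuous in practice)
    is complete iff every divergent path has infinite length, i.e. the
    length  int_0^s rho(gamma t) |gamma'(t)| dt  is unbounded as s -> 1^-. *)
Definition complete_conformal_metric (rho : Cpx -> R) : Prop :=
  forall gamma gamma' : R -> Cpx, divergent_path gamma gamma' ->
    forall M : R, exists s : R, 0 <= s < 1 /\
      exists pr : Riemann_integrable
                    (fun t => rho (gamma t) * Cmod (gamma' t)) 0 s,
        M < RiemannInt pr.

(** The induced metric of a holomorphic immersion F = (X,Y,Z) : D_1 -> Cpx^3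
    is |F_z|^2 |dz|^2 (up to an irrelevant constant factor), with
    |F_z|^2 = |X'|^2 + |Y'|^2 + |Z'|^2. *)
Definition induced_density (X' Y' Z' : Cpx -> Cpx) (z : Cpx) : R :=
  sqrt (Cnorm2 (X' z) + Cnorm2 (Y' z) + Cnorm2 (Z' z)).

Definition two : Cpx := (2, 0).
Definition omega_coef (W X' : Cpx -> Cpx) (z : Cpx) : Cpx :=
  Cmul (Cexp (Copp (Cmul two (W z)))) (X' z).
Definition theta_coef (W X' Y Y' : Cpx -> Cpx) (z : Cpx) : Cpx :=
  Cmul (Cexp (Cmul two (W z)))
       (Csub (Y' z) (Cmul (Cmul (Y z) (Y z)) (X' z))).

(** ds^2_L = |omega|^2 + |theta|^2, as a conformal density rho with ds = rho |dz|. *)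
Definition dsL_density (W X' Y Y' : Cpx -> Cpx) (z : Cpx) : R :=
  sqrt (Cnorm2 (omega_coef W X' z) + Cnorm2 (theta_coef W X' Y Y' z)).

(* Main.v *)
From Pilot Require Import Defs.
From Stdlib Require Import Reals Lra Psatz Ring Field Classical FunctionalExtensionality ZArith.
From Coquelicot Require Import Coquelicot.
Open Scope R_scope.

Lemma Cmod_eq (z : C) : Defs.Cmod z = Cmod z.
Proof. unfold Defs.Cmod, Cmod, Cnorm2. f_equal. simpl. ring. Qed.

Lemma Cdiv_eq (a b : C) : Defs.Cdiv a b = (a / b)%C.
Proof.
  unfold Defs.Cdiv, Defs.Cinv, Cnorm2, Cdiv, Cinv. simpl.
  replace (fst b * (fst b * 1) + snd b * (snd b * 1)) with (fst b * fst b + snd b * snd b) by ring.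
  reflexivity.
Qed.

Lemma Csub_eq (a b : C) : Csub a b = (a - b)%C.
Proof. reflexivity. Qed.
Lemma Cadd_eq (a b : C) : Cadd a b = (a + b)%C.
Proof. reflexivity. Qed.
Lemma Cmul_eq (a b : C) : Cmul a b = (a * b)%C.
Proof. reflexivity. Qed.
Lemma Copp_eq (a : C) : Defs.Copp a = (- a)%C.
Proof. reflexivity. Qed.

Definition CD (f : C -> C) (z l : C) : Prop :=
  forall eps, 0 < eps -> exists delta, 0 < delta /\
    forall h : C, Cmod h < delta -> Cmod (f (z + h) - f z - l * h)%C <= eps * Cmod h.

Definition Ccont (f : C -> C) (z : C) : Prop :=
  forall eps, 0 < eps -> exists delta, 0 < delta /\
    forall w : C, Cmod (w - z)%C < delta -> Cmod (f w - f z)%C < eps.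

Lemma has_CD (f : C -> C) (z l : C) : has_cderiv f z l -> CD f z l.
Proof.
  intros H eps Heps. destruct (H eps Heps) as [d [Hd Hh]].
  exists d; split; auto. intros h Hhd.
  destruct (Ceq_dec h 0) as [->|Hn].
  - replace (f (z + 0) - f z - l * 0)%C with (RtoC 0).
    + rewrite Cmod_R, Rabs_R0. lra.
    + replace (z + 0)%C with z by ring. ring.
  - assert (Hq := Hh h Hn). rewrite !Cmod_eq in Hq.
    specialize (Hq Hhd).
    assert (Hq' : Cmod ((f (z + h) - f z) / h - l)%C < eps) by (rewrite <- Cdiv_eq; exact Hq).
    replace (f (z + h) - f z - l * h)%C with (((f (z + h) - f z) / h - l) * h)%C
      by (field; auto).
    rewrite Cmod_mult. apply Rmult_le_compat_r. apply Cmod_ge_0. lra.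
Qed.

Lemma Cmod_sub_sym (a b : C) : Cmod (a - b)%C = Cmod (b - a)%C.
Proof. replace (a - b)%C with (- (b - a))%C by ring. apply Cmod_opp. Qed.

Lemma Cmod_tri3 (a b c : C) : Cmod (a + b + c)%C <= Cmod a + Cmod b + Cmod c.
Proof.
  eapply Rle_trans. apply Cmod_triangle. pose proof (Cmod_triangle a b). lra.
Qed.

Lemma CD_cont (f : C -> C) (z l : C) : CD f z l -> Ccont f z.
Proof.
  intros H eps Heps. destruct (H 1 Rlt_0_1) as [d [Hd Hh]].
  set (M := Cmod l + 1).
  assert (HM : 0 < M) by (unfold M; pose proof (Cmod_ge_0 l); lra).
  exists (Rmin d (eps / M)). split.
  { apply Rmin_pos; auto. apply Rdiv_lt_0_compat; auto. }
  intros w Hw. set (h := (w - z)%C).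
  assert (Hwz : w = (z + h)%C) by (unfold h; ring). rewrite Hwz.
  assert (H1 := Hh h (Rlt_le_trans _ _ _ Hw (Rmin_l _ _))).
  replace (f (z + h) - f z)%C with ((f (z + h) - f z - l * h) + l * h)%C by ring.
  eapply Rle_lt_trans. apply Cmod_triangle. rewrite Cmod_mult.
  assert (Hh2 : Cmod h < eps / M) by (eapply Rlt_le_trans; [apply Hw| apply Rmin_r]).
  assert (Cmod h * M < eps).
  { apply (Rmult_lt_compat_r M) in Hh2; auto. unfold Rdiv in Hh2.
    rewrite Rmult_assoc, Rinv_l in Hh2; lra. }
  unfold M in H0. pose proof (Cmod_ge_0 h). nra.
Qed.

Lemma Cmod_pos_ge (a : C) : 0 <= Cmod a. Proof. apply Cmod_ge_0. Qed.

Lemma div_mul_le (x y e : R) : 0 < e -> 0 <= x -> x <= e / (3 * (y + 1)) -> 0 <= y -> x * (y + 1) <= e / 3.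
Proof.
  intros He Hx Hxy Hy.
  assert (Hp : 0 < 3 * (y + 1)) by lra.
  apply (Rmult_le_compat_r (y + 1)) in Hxy; [|lra].
  replace (e / (3 * (y + 1)) * (y + 1)) with (e / 3) in Hxy by (field; lra). exact Hxy.
Qed.

Lemma CD_const (c z : C) : CD (fun _ => c) z 0%C.
Proof.
  intros eps Heps. exists 1. split; [lra|]. intros h _.
  replace (c - c - 0 * h)%C with (RtoC 0) by ring. rewrite Cmod_R, Rabs_R0.
  pose proof (Cmod_ge_0 h). nra.
Qed.

Lemma CD_id (z : C) : CD (fun w => w) z 1%C.
Proof.
  intros eps Heps. exists 1. split; [lra|]. intros h _.
  replace (z + h - z - 1 * h)%C with (RtoC 0) by ring. rewrite Cmod_R, Rabs_R0.
  pose proof (Cmod_ge_0 h). nra.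
Qed.

Lemma CD_plus (f g : C -> C) (z lf lg : C) : CD f z lf -> CD g z lg ->
  CD (fun w => f w + g w)%C z (lf + lg)%C.
Proof.
  intros Hf Hg eps Heps.
  destruct (Hf (eps/2)) as [d1 [Hd1 H1]]; [lra|].
  destruct (Hg (eps/2)) as [d2 [Hd2 H2]]; [lra|].
  exists (Rmin d1 d2). split; [apply Rmin_pos; auto|]. intros h Hh.
  specialize (H1 h (Rlt_le_trans _ _ _ Hh (Rmin_l _ _))).
  specialize (H2 h (Rlt_le_trans _ _ _ Hh (Rmin_r _ _))).
  replace (f (z + h) + g (z + h) - (f z + g z) - (lf + lg) * h)%C with
    ((f (z + h) - f z - lf * h) + (g (z + h) - g z - lg * h))%C by ring.
  eapply Rle_trans. apply Cmod_triangle. lra.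
Qed.

Lemma CD_scal (f : C -> C) (c z lf : C) : CD f z lf -> CD (fun w => c * f w)%C z (c * lf)%C.
Proof.
  intros Hf eps Heps.
  destruct (Hf (eps / (Cmod c + 1))) as [d1 [Hd1 H1]].
  { apply Rdiv_lt_0_compat; auto. pose proof (Cmod_ge_0 c); lra. }
  exists d1. split; auto. intros h Hh. specialize (H1 h Hh).
  replace (c * f (z + h) - c * f z - c * lf * h)%C with (c * (f (z + h) - f z - lf * h))%C by ring.
  rewrite Cmod_mult. pose proof (Cmod_ge_0 c). pose proof (Cmod_ge_0 h).
  pose proof (Cmod_ge_0 (f (z + h) - f z - lf * h)%C).
  apply Rle_trans with (Cmod c * (eps / (Cmod c + 1) * Cmod h)).
  { apply Rmult_le_compat_l; auto. }
  assert (Hq : Cmod c * (eps / (Cmod c + 1)) <= eps).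
  { unfold Rdiv. replace (Cmod c * (eps * / (Cmod c + 1))) with (eps * (Cmod c / (Cmod c + 1))) by (field; lra).
    assert (Cmod c / (Cmod c + 1) <= 1).
    { apply Rmult_le_reg_r with (Cmod c + 1); [lra|]. unfold Rdiv. rewrite Rmult_assoc, Rinv_l; lra. }
    nra. }
  nra.
Qed.

Lemma CD_mult (f g : C -> C) (z lf lg : C) : CD f z lf -> CD g z lg ->
  CD (fun w => f w * g w)%C z (lf * g z + f z * lg)%C.
Proof.
  intros Hf Hg eps Heps.
  set (Gz := Cmod (g z)). set (Fz := Cmod (f z)). set (Lf := Cmod lf).
  assert (HGz : 0 <= Gz) by apply Cmod_ge_0.
  assert (HFz : 0 <= Fz) by apply Cmod_ge_0.
  assert (HLf : 0 <= Lf) by apply Cmod_ge_0.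
  destruct (Hf (eps / (3 * (Gz + 1)))) as [d1 [Hd1 H1]].
  { apply Rdiv_lt_0_compat; lra. }
  destruct (Hg (eps / (3 * (Fz + 1)))) as [d2 [Hd2 H2]].
  { apply Rdiv_lt_0_compat; lra. }
  destruct (CD_cont g z lg Hg (Rmin 1 (eps / (3 * (Lf + 1))))) as [d3 [Hd3 H3]].
  { apply Rmin_pos; [lra|]. apply Rdiv_lt_0_compat; lra. }
  exists (Rmin d1 (Rmin d2 d3)). split.
  { repeat apply Rmin_pos; auto. }
  intros h Hh.
  assert (Hh1 : Cmod h < d1) by (eapply Rlt_le_trans; [apply Hh|apply Rmin_l]).
  assert (Hh2 : Cmod h < d2) by (eapply Rlt_le_trans; [apply Hh|]; eapply Rle_trans; [apply Rmin_r|apply Rmin_l]).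
  assert (Hh3 : Cmod h < d3) by (eapply Rlt_le_trans; [apply Hh|]; eapply Rle_trans; [apply Rmin_r|apply Rmin_r]).
  specialize (H1 h Hh1). specialize (H2 h Hh2).
  assert (H3' := H3 (z + h)%C). replace (z + h - z)%C with h in H3' by ring.
  specialize (H3' Hh3).
  set (A := (f (z + h) - f z - lf * h)%C) in *.
  set (B := (g (z + h) - g z - lg * h)%C) in *.
  set (D := (g (z + h) - g z)%C) in *.
  replace (f (z + h) * g (z + h) - f z * g z - (lf * g z + f z * lg) * h)%C with
    (A * g (z + h) + f z * B + lf * h * D)%C by (unfold A, B, D; ring).
  eapply Rle_trans. apply Cmod_tri3. rewrite !Cmod_mult. fold Fz Lf.
  assert (HD1 : Cmod D < 1) by (eapply Rlt_le_trans; [apply H3'|apply Rmin_l]).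
  assert (HD2 : Cmod D < eps / (3 * (Lf + 1))) by (eapply Rlt_le_trans; [apply H3'|apply Rmin_r]).
  assert (Hgzh : Cmod (g (z + h)%C) <= Gz + 1).
  { replace (g (z + h)%C) with (g z + D)%C by (unfold D; ring).
    eapply Rle_trans. apply Cmod_triangle. fold Gz. lra. }
  pose proof (Cmod_ge_0 h) as Hh0. pose proof (Cmod_ge_0 A) as HA0.
  pose proof (Cmod_ge_0 B) as HB0. pose proof (Cmod_ge_0 D) as HD0.
  pose proof (Cmod_ge_0 (g (z+h)%C)) as Hg0.
  assert (T1 : Cmod A * Cmod (g (z + h)%C) <= eps / 3 * Cmod h).
  { apply Rle_trans with (eps / (3 * (Gz + 1)) * Cmod h * (Gz + 1)).
    - apply Rmult_le_compat; auto.
    - replace (eps / (3 * (Gz + 1)) * Cmod h * (Gz + 1)) with (eps / 3 * Cmod h) by (field; lra). lra. }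
  assert (T2 : Fz * Cmod B <= eps / 3 * Cmod h).
  { apply Rle_trans with (Fz * (eps / (3 * (Fz + 1)) * Cmod h)).
    - apply Rmult_le_compat_l; auto.
    - assert (Fz * (eps / (3 * (Fz + 1))) <= eps / 3).
      { apply Rle_trans with ((Fz + 1) * (eps / (3 * (Fz + 1)))).
        + apply Rmult_le_compat_r; [apply Rlt_le, Rdiv_lt_0_compat; lra| lra].
        + right. field. lra. }
      nra. }
  assert (T3 : Lf * Cmod h * Cmod D <= eps / 3 * Cmod h).
  { assert (Lf * Cmod D <= eps / 3).
    { apply Rle_trans with ((Lf + 1) * (eps / (3 * (Lf + 1)))).
      + apply Rmult_le_compat; lra.
      + right. field. lra. }
    nra. }
  lra.
Qed.

Lemma Cmod_lower (u v : C) : Cmod (u - v)%C <= Cmod v / 2 -> Cmod v / 2 <= Cmod u.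
Proof.
  intros H. pose proof (Cmod_triangle u (v - u)%C).
  replace (u + (v - u))%C with v in H0 by ring. rewrite Cmod_sub_sym in H0. lra.
Qed.

Lemma CD_inv (f : C -> C) (z lf : C) : CD f z lf -> f z <> 0%C ->
  CD (fun w => / f w)%C z (- lf / (f z * f z))%C.
Proof.
  intros Hf Hz eps Heps.
  set (Fz := Cmod (f z)). set (Lf := Cmod lf).
  assert (HFz : 0 < Fz) by (apply Cmod_gt_0; auto).
  assert (HLf : 0 <= Lf) by apply Cmod_ge_0.
  destruct (Hf (eps * Fz * Fz / 4)) as [d1 [Hd1 H1]].
  { apply Rdiv_lt_0_compat; [|lra]. repeat apply Rmult_lt_0_compat; auto. }
  destruct (CD_cont f z lf Hf (Rmin (Fz / 2) (eps * Fz * Fz * Fz / (4 * (Lf + 1))))) as [d3 [Hd3 H3]].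
  { apply Rmin_pos; [lra|]. apply Rdiv_lt_0_compat; [|lra]. repeat apply Rmult_lt_0_compat; auto. }
  exists (Rmin d1 d3). split; [apply Rmin_pos; auto|].
  intros h Hh.
  assert (Hh1 : Cmod h < d1) by (eapply Rlt_le_trans; [apply Hh|apply Rmin_l]).
  assert (Hh3 : Cmod h < d3) by (eapply Rlt_le_trans; [apply Hh|apply Rmin_r]).
  specialize (H1 h Hh1).
  assert (H3' := H3 (z + h)%C). replace (z + h - z)%C with h in H3' by ring.
  specialize (H3' Hh3).
  set (u := f (z + h)%C) in *. set (v := f z) in *.
  set (A := (u - v - lf * h)%C) in *.
  assert (HD1 : Cmod (u - v)%C < Fz / 2) by (eapply Rlt_le_trans; [apply H3'|apply Rmin_l]).
  assert (HD2 : Cmod (u - v)%C < eps * Fz * Fz * Fz / (4 * (Lf + 1))) by (eapply Rlt_le_trans; [apply H3'|apply Rmin_r]).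
  assert (Hu : Fz / 2 <= Cmod u) by (apply Cmod_lower; fold v Fz; lra).
  assert (Hu0 : u <> 0%C) by (apply Cmod_gt_0; lra).
  replace (/ u - / v - - lf / (v * v) * h)%C with
    ((- A) / (u * v) + lf * h * (u - v) / (u * v * v))%C by (unfold A; field; auto).
  eapply Rle_trans. apply Cmod_triangle.
  rewrite !Cmod_div; try (repeat apply Cmult_neq_0; auto).
  rewrite !Cmod_mult, Cmod_opp. fold v Fz Lf.
  pose proof (Cmod_ge_0 h) as Hh0. pose proof (Cmod_ge_0 A) as HA0.
  pose proof (Cmod_ge_0 (u - v)%C) as HD0.
  assert (Huv : Fz * Fz / 2 <= Cmod u * Fz) by nra.
  assert (T1 : Cmod A / (Cmod u * Fz) <= eps / 2 * Cmod h).
  { apply Rle_trans with (Cmod A / (Fz * Fz / 2)).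
    - apply Rmult_le_compat_l; auto. apply Rinv_le_contravar; auto. nra.
    - apply Rle_trans with (eps * Fz * Fz / 4 * Cmod h / (Fz * Fz / 2)).
      + apply Rmult_le_compat_r; auto. apply Rlt_le, Rinv_0_lt_compat. nra.
      + right. field. lra. }
  assert (HF3 : 0 < Fz * Fz * Fz / 2) by (apply Rdiv_lt_0_compat; [repeat apply Rmult_lt_0_compat|]; lra).
  assert (Hc : Fz * Fz * Fz / 2 <= Cmod u * Fz * Fz).
  { apply Rle_trans with (Fz / 2 * (Fz * Fz)); [right; field|].
    rewrite Rmult_assoc. apply Rmult_le_compat_r; [nra|lra]. }
  assert (T2 : Lf * Cmod h * Cmod (u - v)%C / (Cmod u * Fz * Fz) <= eps / 2 * Cmod h).
  { apply Rle_trans with (Lf * Cmod h * Cmod (u - v)%C / (Fz * Fz * Fz / 2)).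
    - apply Rmult_le_compat_l; [apply Rmult_le_pos; [apply Rmult_le_pos|]; auto|].
      apply Rinv_le_contravar. exact HF3. exact Hc.
    - apply Rle_trans with (Lf * Cmod h * (eps * Fz * Fz * Fz / (4 * (Lf + 1))) / (Fz * Fz * Fz / 2)).
      + apply Rmult_le_compat_r. apply Rlt_le, Rinv_0_lt_compat. exact HF3.
        apply Rmult_le_compat_l; [nra|lra].
      + apply Rle_trans with ((Lf + 1) * Cmod h * (eps * Fz * Fz * Fz / (4 * (Lf + 1))) / (Fz * Fz * Fz / 2)).
        * apply Rmult_le_compat_r. apply Rlt_le, Rinv_0_lt_compat. exact HF3.
          apply Rmult_le_compat_r. apply Rlt_le, Rdiv_lt_0_compat; [|lra]. repeat apply Rmult_lt_0_compat; auto.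
          nra.
        * right. field. lra. }
  lra.
Qed.

Ltac Req := match goal with |- @eq _ ?a ?b => change (@eq R a b) end.

Lemma RInt_lin2 (f g : R -> R) (p q a b : R) : ex_RInt f a b -> ex_RInt g a b ->
  RInt (fun x => p * f x + q * g x) a b = p * RInt f a b + q * RInt g a b.
Proof.
  intros Hf Hg. apply is_RInt_unique.
  apply (is_RInt_plus (V := R_NormedModule) (fun x => p * f x) (fun x => q * g x)).
  - apply (is_RInt_scal (V := R_NormedModule) f a b p). apply (RInt_correct (V := R_CompleteNormedModule)); auto.
  - apply (is_RInt_scal (V := R_NormedModule) g a b q). apply (RInt_correct (V := R_CompleteNormedModule)); auto.
Qed.

Lemma ex_RInt_lin2 (f g : R -> R) (p q a b : R) : ex_RInt f a b -> ex_RInt g a b ->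
  ex_RInt (fun x => p * f x + q * g x) a b.
Proof.
  intros Hf Hg.
  apply (ex_RInt_plus (V := R_NormedModule) (fun x => p * f x) (fun x => q * g x)).
  - apply (ex_RInt_scal (V := R_NormedModule) f a b p); auto.
  - apply (ex_RInt_scal (V := R_NormedModule) g a b q); auto.
Qed.

Definition hseg (k : C -> C) (a b y : R) : C :=
  (RInt (fun x => fst (k (x, y))) a b, RInt (fun x => snd (k (x, y))) a b).
Definition vseg (k : C -> C) (c d x : R) : C :=
  (RInt (fun y => fst (k (x, y))) c d, RInt (fun y => snd (k (x, y))) c d).
Definition rect (k : C -> C) (a b c d : R) : C :=
  (hseg k a b c + Ci * vseg k c d b - hseg k a b d - Ci * vseg k c d a)%C.

Definition hcont (k : C -> C) (a b y : R) := forall x, a <= x <= b -> Ccont k (x, y).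
Definition vcont (k : C -> C) (c d x : R) := forall y, c <= y <= d -> Ccont k (x, y).
Definition bcont k a b c d := hcont k a b c /\ hcont k a b d /\ vcont k c d a /\ vcont k c d b.

Lemma Cmod_pair_h (x x0 y : R) : Cmod ((x, y) - (x0, y))%C = Rabs (x - x0).
Proof.
  replace ((x, y) - (x0, y))%C with (RtoC (x - x0)).
  - apply Cmod_R.
  - unfold RtoC. apply injective_projections; simpl; ring.
Qed.
Lemma Cmod_pair_v (x y y0 : R) : Cmod ((x, y) - (x, y0))%C = Rabs (y - y0).
Proof.
  replace ((x, y) - (x, y0))%C with (Ci * RtoC (y - y0))%C.
  - rewrite Cmod_mult, Cmod_Ci, Cmod_R. ring.
  - unfold RtoC, Ci. apply injective_projections; simpl; ring.
Qed.

Lemma Rabs_fst_le (z : C) : Rabs (fst z) <= Cmod z.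
Proof. eapply Rle_trans; [apply Rmax_l|apply Rmax_Cmod]. Qed.
Lemma Rabs_snd_le (z : C) : Rabs (snd z) <= Cmod z.
Proof. eapply Rle_trans; [apply Rmax_r|apply Rmax_Cmod]. Qed.

Lemma cont_of_pt (f : R -> R) (x0 : R) :
  (forall eps, 0 < eps -> exists d, 0 < d /\ forall x, Rabs (x - x0) < d -> Rabs (f x - f x0) < eps) ->
  continuous f x0.
Proof.
  intros H. apply continuity_pt_filterlim. intros eps Heps.
  destruct (H eps Heps) as [d [Hd Hx]]. exists d. split; auto.
  intros x [_ Hxd]. apply Hx. exact Hxd.
Qed.

Lemma Ccont_h (k : C -> C) (x0 y : R) (comp : C -> R) :
  (forall z, Rabs (comp z) <= Cmod z) -> (forall u v, comp (u - v)%C = comp u - comp v) ->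
  Ccont k (x0, y) -> continuous (fun x => comp (k (x, y))) x0.
Proof.
  intros Hc Hl H. apply cont_of_pt. intros eps Heps.
  destruct (H eps Heps) as [d [Hd Hw]]. exists d. split; auto.
  intros x Hx. rewrite <- Hl. eapply Rle_lt_trans. apply Hc. apply Hw.
  rewrite Cmod_pair_h. exact Hx.
Qed.
Lemma Ccont_v (k : C -> C) (x y0 : R) (comp : C -> R) :
  (forall z, Rabs (comp z) <= Cmod z) -> (forall u v, comp (u - v)%C = comp u - comp v) ->
  Ccont k (x, y0) -> continuous (fun y => comp (k (x, y))) y0.
Proof.
  intros Hc Hl H. apply cont_of_pt. intros eps Heps.
  destruct (H eps Heps) as [d [Hd Hw]]. exists d. split; auto.
  intros y Hy. rewrite <- Hl. eapply Rle_lt_trans. apply Hc. apply Hw.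
  rewrite Cmod_pair_v. exact Hy.
Qed.

Lemma fst_sub (u v : C) : fst (u - v)%C = fst u - fst v. Proof. reflexivity. Qed.
Lemma snd_sub (u v : C) : snd (u - v)%C = snd u - snd v. Proof. reflexivity. Qed.

Lemma hcont_ex (k : C -> C) a b y : a <= b -> hcont k a b y ->
  ex_RInt (fun x => fst (k (x, y))) a b /\ ex_RInt (fun x => snd (k (x, y))) a b.
Proof.
  intros Hab H. split; apply (ex_RInt_continuous (V := R_CompleteNormedModule)); intros z Hz;
  rewrite Rmin_left, Rmax_right in Hz by lra.
  - apply Ccont_h; [apply Rabs_fst_le|apply fst_sub|apply H; auto].
  - apply Ccont_h; [apply Rabs_snd_le|apply snd_sub|apply H; auto].
Qed.
Lemma vcont_ex (k : C -> C) c d x : c <= d -> vcont k c d x ->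
  ex_RInt (fun y => fst (k (x, y))) c d /\ ex_RInt (fun y => snd (k (x, y))) c d.
Proof.
  intros Hab H. split; apply (ex_RInt_continuous (V := R_CompleteNormedModule)); intros z Hz;
  rewrite Rmin_left, Rmax_right in Hz by lra.
  - apply Ccont_v; [apply Rabs_fst_le|apply fst_sub|apply H; auto].
  - apply Ccont_v; [apply Rabs_snd_le|apply snd_sub|apply H; auto].
Qed.

Lemma hcont_sub k a b y a' b' : a <= a' -> b' <= b -> hcont k a b y -> hcont k a' b' y.
Proof. intros H1 H2 H x Hx. apply H. lra. Qed.
Lemma vcont_sub k c d x c' d' : c <= c' -> d' <= d -> vcont k c d x -> vcont k c' d' x.
Proof. intros H1 H2 H y Hy. apply H. lra. Qed.

Lemma hseg_split k a m b y : a <= m <= b -> hcont k a b y ->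
  hseg k a b y = (hseg k a m y + hseg k m b y)%C.
Proof.
  intros Hm H.
  destruct (hcont_ex k a m y ltac:(lra) (hcont_sub k a b y a m ltac:(lra) ltac:(lra) H)) as [E1 E2].
  destruct (hcont_ex k m b y ltac:(lra) (hcont_sub k a b y m b ltac:(lra) ltac:(lra) H)) as [E3 E4].
  unfold hseg. apply injective_projections; simpl; symmetry; apply (RInt_Chasles (V := R_CompleteNormedModule)); auto.
Qed.
Lemma vseg_split k c m d x : c <= m <= d -> vcont k c d x ->
  vseg k c d x = (vseg k c m x + vseg k m d x)%C.
Proof.
  intros Hm H.
  destruct (vcont_ex k c m x ltac:(lra) (vcont_sub k c d x c m ltac:(lra) ltac:(lra) H)) as [E1 E2].
  destruct (vcont_ex k m d x ltac:(lra) (vcont_sub k c d x m d ltac:(lra) ltac:(lra) H)) as [E3 E4].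
  unfold vseg. apply injective_projections; simpl; symmetry; apply (RInt_Chasles (V := R_CompleteNormedModule)); auto.
Qed.

Lemma split_x k a m b c d : a <= m <= b -> hcont k a b c -> hcont k a b d ->
  rect k a b c d = (rect k a m c d + rect k m b c d)%C.
Proof.
  intros Hm Hc Hd. unfold rect.
  rewrite (hseg_split k a m b c Hm Hc), (hseg_split k a m b d Hm Hd). ring.
Qed.
Lemma split_y k a b c m d : c <= m <= d -> vcont k c d a -> vcont k c d b ->
  rect k a b c d = (rect k a b c m + rect k a b m d)%C.
Proof.
  intros Hm Ha Hb. unfold rect.
  rewrite (vseg_split k c m d a Hm Ha), (vseg_split k c m d b Hm Hb). ring.
Qed.

Lemma RInt_lin4 (f1 f2 f3 f4 : R -> R) (p1 p2 p3 p4 a b : R) :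
  ex_RInt f1 a b -> ex_RInt f2 a b -> ex_RInt f3 a b -> ex_RInt f4 a b ->
  RInt (fun x => 1 * (p1 * f1 x + p2 * f2 x) + 1 * (p3 * f3 x + p4 * f4 x)) a b =
  p1 * RInt f1 a b + p2 * RInt f2 a b + (p3 * RInt f3 a b + p4 * RInt f4 a b).
Proof.
  intros E1 E2 E3 E4.
  rewrite RInt_lin2 by (apply ex_RInt_lin2; auto).
  rewrite !RInt_lin2 by auto. rewrite !Rmult_1_l. reflexivity.
Qed.

Lemma hseg_lin (k1 k2 : C -> C) (al be : C) a b y : a <= b -> hcont k1 a b y -> hcont k2 a b y ->
  hseg (fun w => al * k1 w + be * k2 w)%C a b y = (al * hseg k1 a b y + be * hseg k2 a b y)%C.
Proof.
  intros Hab H1 H2.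
  destruct (hcont_ex k1 a b y Hab H1) as [E1 E2].
  destruct (hcont_ex k2 a b y Hab H2) as [E3 E4].
  unfold hseg. apply injective_projections; simpl.
  - rewrite (RInt_ext _ (fun x => 1 * (fst al * fst (k1 (x, y)) + (- snd al) * snd (k1 (x, y))) + 1 * (fst be * fst (k2 (x, y)) + (- snd be) * snd (k2 (x, y))))) by (intros; simpl; ring).
    rewrite RInt_lin4 by auto. ring.
  - rewrite (RInt_ext _ (fun x => 1 * (snd al * fst (k1 (x, y)) + fst al * snd (k1 (x, y))) + 1 * (snd be * fst (k2 (x, y)) + fst be * snd (k2 (x, y))))) by (intros; simpl; ring).
    rewrite RInt_lin4 by auto. ring.
Qed.
Lemma vseg_lin (k1 k2 : C -> C) (al be : C) c d x : c <= d -> vcont k1 c d x -> vcont k2 c d x ->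
  vseg (fun w => al * k1 w + be * k2 w)%C c d x = (al * vseg k1 c d x + be * vseg k2 c d x)%C.
Proof.
  intros Hab H1 H2.
  destruct (vcont_ex k1 c d x Hab H1) as [E1 E2].
  destruct (vcont_ex k2 c d x Hab H2) as [E3 E4].
  unfold vseg. apply injective_projections; simpl.
  - rewrite (RInt_ext _ (fun y => 1 * (fst al * fst (k1 (x, y)) + (- snd al) * snd (k1 (x, y))) + 1 * (fst be * fst (k2 (x, y)) + (- snd be) * snd (k2 (x, y))))) by (intros; simpl; ring).
    rewrite RInt_lin4 by auto. ring.
  - rewrite (RInt_ext _ (fun y => 1 * (snd al * fst (k1 (x, y)) + fst al * snd (k1 (x, y))) + 1 * (snd be * fst (k2 (x, y)) + fst be * snd (k2 (x, y))))) by (intros; simpl; ring).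
    rewrite RInt_lin4 by auto. ring.
Qed.

Lemma rect_lin (k1 k2 : C -> C) (al be : C) a b c d : a <= b -> c <= d ->
  bcont k1 a b c d -> bcont k2 a b c d ->
  rect (fun w => al * k1 w + be * k2 w)%C a b c d = (al * rect k1 a b c d + be * rect k2 a b c d)%C.
Proof.
  intros Hab Hcd [H1 [H2 [H3 H4]]] [G1 [G2 [G3 G4]]].
  unfold rect.
  rewrite (hseg_lin k1 k2 al be a b c), (hseg_lin k1 k2 al be a b d),
    (vseg_lin k1 k2 al be c d a), (vseg_lin k1 k2 al be c d b); auto. ring.
Qed.

Lemma RInt_poly1 (P Q a b : R) : RInt (fun x => P + Q * x) a b = P * (b - a) + Q * (b * b - a * a) / 2.
Proof.
  apply is_RInt_unique.
  replace (P * (b - a) + Q * (b * b - a * a) / 2) with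
    ((fun x => P * x + Q * (x * x) / 2) b - (fun x => P * x + Q * (x * x) / 2) a) by (simpl; field).
  apply (is_RInt_derive (V := R_CompleteNormedModule) (fun x => P * x + Q * (x * x) / 2)).
  - intros x _. auto_derive; auto. field.
  - intros x _. apply (continuous_plus (V := R_NormedModule) (fun _ => P) (fun x => Q * x)).
    + apply continuous_const.
    + apply (continuous_scal_r (V := R_NormedModule) Q (fun x => x)). apply continuous_id.
Qed.

Lemma rect_affine (al be : C) a b c d : rect (fun w => al + be * w)%C a b c d = 0%C.
Proof.
  assert (Hh : forall y a b, hseg (fun w => al + be * w)%C a b y =
     ((fst al - snd be * y) * (b - a) + fst be * (b * b - a * a) / 2,
      (snd al + fst be * y) * (b - a) + snd be * (b * b - a * a) / 2)).
  { intros y a0 b0. unfold hseg. apply injective_projections; simpl; rewrite <- RInt_poly1;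
    apply RInt_ext; intros; simpl; ring. }
  assert (Hv : forall x c d, vseg (fun w => al + be * w)%C c d x =
     ((fst al + fst be * x) * (d - c) + (- snd be) * (d * d - c * c) / 2,
      (snd al + snd be * x) * (d - c) + fst be * (d * d - c * c) / 2)).
  { intros x c0 d0. unfold vseg. apply injective_projections; simpl; rewrite <- RInt_poly1;
    apply RInt_ext; intros; simpl; ring. }
  unfold rect. rewrite !Hh, !Hv. unfold Ci. apply injective_projections; simpl; field.
Qed.

Lemma Cmod_pair_le (p q : R) : Cmod (p, q) <= Rabs p + Rabs q.
Proof.
  replace (p, q) with (RtoC p + Ci * RtoC q)%C.
  - eapply Rle_trans. apply Cmod_triangle. rewrite Cmod_mult, Cmod_Ci, !Cmod_R. lra.
  - unfold RtoC, Ci. apply injective_projections; simpl; ring.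
Qed.

Lemma hseg_bound k a b y B : a <= b -> hcont k a b y ->
  (forall x, a <= x <= b -> Cmod (k (x, y)) <= B) -> Cmod (hseg k a b y) <= 2 * (b - a) * B.
Proof.
  intros Hab H HB. destruct (hcont_ex k a b y Hab H) as [E1 E2].
  unfold hseg. eapply Rle_trans. apply Cmod_pair_le.
  assert (A1 := abs_RInt_le_const _ a b B Hab E1 (fun t Ht => Rle_trans _ _ _ (Rabs_fst_le _) (HB t Ht))).
  assert (A2 := abs_RInt_le_const _ a b B Hab E2 (fun t Ht => Rle_trans _ _ _ (Rabs_snd_le _) (HB t Ht))).
  lra.
Qed.
Lemma vseg_bound k c d x B : c <= d -> vcont k c d x ->
  (forall y, c <= y <= d -> Cmod (k (x, y)) <= B) -> Cmod (vseg k c d x) <= 2 * (d - c) * B.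
Proof.
  intros Hab H HB. destruct (vcont_ex k c d x Hab H) as [E1 E2].
  unfold vseg. eapply Rle_trans. apply Cmod_pair_le.
  assert (A1 := abs_RInt_le_const _ c d B Hab E1 (fun t Ht => Rle_trans _ _ _ (Rabs_fst_le _) (HB t Ht))).
  assert (A2 := abs_RInt_le_const _ c d B Hab E2 (fun t Ht => Rle_trans _ _ _ (Rabs_snd_le _) (HB t Ht))).
  lra.
Qed.

Lemma rect_bound k a b c d B : a <= b -> c <= d -> bcont k a b c d ->
  (forall x, a <= x <= b -> Cmod (k (x, c)) <= B /\ Cmod (k (x, d)) <= B) ->
  (forall y, c <= y <= d -> Cmod (k (a, y)) <= B /\ Cmod (k (b, y)) <= B) ->
  Cmod (rect k a b c d) <= 4 * ((b - a) + (d - c)) * B.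
Proof.
  intros Hab Hcd [H1 [H2 [H3 H4]]] Hx Hy.
  assert (B1 := hseg_bound k a b c B Hab H1 (fun x Hx' => proj1 (Hx x Hx'))).
  assert (B2 := hseg_bound k a b d B Hab H2 (fun x Hx' => proj2 (Hx x Hx'))).
  assert (B3 := vseg_bound k c d a B Hcd H3 (fun y Hy' => proj1 (Hy y Hy'))).
  assert (B4 := vseg_bound k c d b B Hcd H4 (fun y Hy' => proj2 (Hy y Hy'))).
  unfold rect.
  replace (hseg k a b c + Ci * vseg k c d b - hseg k a b d - Ci * vseg k c d a)%C with
    (hseg k a b c + Ci * vseg k c d b + (- hseg k a b d + - (Ci * vseg k c d a)))%C by ring.
  eapply Rle_trans. apply Cmod_triangle. eapply Rle_trans. apply Rplus_le_compat; apply Cmod_triangle.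
  rewrite !Cmod_opp, !Cmod_mult, Cmod_Ci. lra.
Qed.

Lemma nat_big x : exists n, x < INR n.
Proof.
  destruct (archimed (Rabs x)) as [H _].
  assert (Hp : (0 < up (Rabs x))%Z).
  { apply lt_IZR. pose proof (Rabs_pos x). simpl. lra. }
  exists (Z.to_nat (up (Rabs x))). rewrite INR_IZR_INZ, Z2Nat.id by lia.
  pose proof (Rle_abs x). lra.
Qed.

Lemma INR_le_pow2 n : INR n <= 2 ^ n.
Proof.
  induction n. simpl; lra.
  rewrite S_INR. simpl. assert (1 <= 2 ^ n) by (apply pow_R1_Rle; lra). lra.
Qed.

Lemma small_pow x d : 0 < d -> exists n, x / 2 ^ n < d.
Proof.
  intros Hd. destruct (nat_big (x / d)) as [n Hn]. exists n.
  pose proof (INR_le_pow2 n). assert (H2 : 0 < 2 ^ n) by (apply pow_lt; lra).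
  apply (Rmult_lt_reg_r (2 ^ n)); auto. unfold Rdiv. rewrite Rmult_assoc, Rinv_l by lra.
  rewrite Rmult_1_r. apply (Rmult_lt_compat_r d) in Hn; auto.
  unfold Rdiv in Hn. rewrite Rmult_assoc, Rinv_l, Rmult_1_r in Hn by lra. nra.
Qed.

Definition cpt (k : C -> C) (a b c d : R) :=
  forall w : C, a <= fst w <= b -> c <= snd w <= d -> exists l, CD k w l.

Lemma cpt_sub k a b c d a' b' c' d' : a <= a' -> b' <= b -> c <= c' -> d' <= d ->
  cpt k a b c d -> cpt k a' b' c' d'.
Proof. intros H1 H2 H3 H4 H w Hw1 Hw2. apply H; lra. Qed.

Lemma cpt_bcont k a b c d : a <= b -> c <= d -> cpt k a b c d -> bcont k a b c d.
Proof.
  intros Hab Hcd H. unfold bcont, hcont, vcont.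
  split; [|split; [|split]]; intros t Ht.
  - destruct (H (t, c)) as [l Hl]; simpl; try lra. eapply CD_cont; eauto.
  - destruct (H (t, d)) as [l Hl]; simpl; try lra. eapply CD_cont; eauto.
  - destruct (H (a, t)) as [l Hl]; simpl; try lra. eapply CD_cont; eauto.
  - destruct (H (b, t)) as [l Hl]; simpl; try lra. eapply CD_cont; eauto.
Qed.

Record Rt := mkR { ra : R; rb : R; rc : R; rd : R }.
Definition rectR k (r : Rt) := rect k (ra r) (rb r) (rc r) (rd r).

Definition q1 r := mkR (ra r) ((ra r + rb r) / 2) (rc r) ((rc r + rd r) / 2).
Definition q2 r := mkR ((ra r + rb r) / 2) (rb r) (rc r) ((rc r + rd r) / 2).
Definition q3 r := mkR (ra r) ((ra r + rb r) / 2) ((rc r + rd r) / 2) (rd r).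
Definition q4 r := mkR ((ra r + rb r) / 2) (rb r) ((rc r + rd r) / 2) (rd r).

Lemma quarter_sum k r : ra r <= rb r -> rc r <= rd r -> cpt k (ra r) (rb r) (rc r) (rd r) ->
  rectR k r = (rectR k (q1 r) + rectR k (q2 r) + rectR k (q3 r) + rectR k (q4 r))%C.
Proof.
  destruct r as [a b c d]. unfold rectR, q1, q2, q3, q4; simpl. intros Hab Hcd H.
  set (m := (a + b) / 2). set (n := (c + d) / 2).
  assert (Hm : a <= m <= b) by (unfold m; lra).
  assert (Hn : c <= n <= d) by (unfold n; lra).
  destruct (cpt_bcont k a b c d Hab Hcd H) as [H1 [H2 [H3 H4]]].
  rewrite (split_x k a m b c d Hm H1 H2).
  destruct (cpt_bcont k a m c d ltac:(lra) Hcd (cpt_sub k a b c d a m c d ltac:(lra) ltac:(lra) ltac:(lra) ltac:(lra) H)) as [G1 [G2 [G3 G4]]].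
  destruct (cpt_bcont k m b c d ltac:(lra) Hcd (cpt_sub k a b c d m b c d ltac:(lra) ltac:(lra) ltac:(lra) ltac:(lra) H)) as [F1 [F2 [F3 F4]]].
  rewrite (split_y k a m c n d Hn G3 G4), (split_y k m b c n d Hn F3 F4). ring.
Qed.

Definition pick k r :=
  if Rle_dec (Cmod (rectR k r) / 4) (Cmod (rectR k (q1 r))) then q1 r
  else if Rle_dec (Cmod (rectR k r) / 4) (Cmod (rectR k (q2 r))) then q2 r
  else if Rle_dec (Cmod (rectR k r) / 4) (Cmod (rectR k (q3 r))) then q3 r
  else q4 r.

Lemma pick_big k r : ra r <= rb r -> rc r <= rd r -> cpt k (ra r) (rb r) (rc r) (rd r) ->
  Cmod (rectR k r) / 4 <= Cmod (rectR k (pick k r)).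
Proof.
  intros Hab Hcd H. unfold pick.
  destruct (Rle_dec _ _) as [E1|E1]; auto.
  destruct (Rle_dec _ _) as [E2|E2]; auto.
  destruct (Rle_dec _ _) as [E3|E3]; auto.
  destruct (Rle_dec (Cmod (rectR k r) / 4) (Cmod (rectR k (q4 r)))) as [E4|E4]; auto.
  exfalso. rewrite (quarter_sum k r Hab Hcd H) in E1, E2, E3, E4.
  set (x1 := rectR k (q1 r)) in *. set (x2 := rectR k (q2 r)) in *.
  set (x3 := rectR k (q3 r)) in *. set (x4 := rectR k (q4 r)) in *.
  pose proof (Cmod_triangle (x1 + x2 + x3) x4). pose proof (Cmod_triangle (x1 + x2) x3).
  pose proof (Cmod_triangle x1 x2). lra.
Qed.

Definition sub_half (r p : Rt) :=
  ra r <= ra p /\ rb p <= rb r /\ rc r <= rc p /\ rd p <= rd r /\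
  rb p - ra p = (rb r - ra r) / 2 /\ rd p - rc p = (rd r - rc r) / 2.

Lemma pick_half k r : ra r <= rb r -> rc r <= rd r -> sub_half r (pick k r).
Proof.
  intros Hab Hcd. unfold pick, sub_half.
  repeat destruct (Rle_dec _ _); simpl; repeat split; lra.
Qed.

Fixpoint rseq k (r0 : Rt) (n : nat) : Rt :=
  match n with O => r0 | S n => pick k (rseq k r0 n) end.

Lemma rseq_props k r0 n : ra r0 <= rb r0 -> rc r0 <= rd r0 ->
  ra r0 <= ra (rseq k r0 n) /\ ra (rseq k r0 n) <= rb (rseq k r0 n) /\ rb (rseq k r0 n) <= rb r0 /\
  rc r0 <= rc (rseq k r0 n) /\ rc (rseq k r0 n) <= rd (rseq k r0 n) /\ rd (rseq k r0 n) <= rd r0 /\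
  rb (rseq k r0 n) - ra (rseq k r0 n) = (rb r0 - ra r0) / 2 ^ n /\
  rd (rseq k r0 n) - rc (rseq k r0 n) = (rd r0 - rc r0) / 2 ^ n.
Proof.
  intros Hab Hcd. induction n.
  - simpl. repeat split; try lra; field.
  - destruct IHn as [I1 [I2 [I3 [I4 [I5 [I6 [I7 I8]]]]]]].
    destruct (pick_half k (rseq k r0 n) I2 I5) as [J1 [J2 [J3 [J4 [J5 J6]]]]].
    simpl rseq. assert (0 < 2 ^ n) by (apply pow_lt; lra).
    repeat split; try lra.
    + rewrite J5, I7. simpl. field. lra.
    + rewrite J6, I8. simpl. field. lra.
Qed.

Lemma rseq_mono k r0 n m : ra r0 <= rb r0 -> rc r0 <= rd r0 -> (n <= m)%nat ->
  ra (rseq k r0 n) <= ra (rseq k r0 m) /\ rb (rseq k r0 m) <= rb (rseq k r0 n) /\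
  rc (rseq k r0 n) <= rc (rseq k r0 m) /\ rd (rseq k r0 m) <= rd (rseq k r0 n).
Proof.
  intros Hab Hcd Hnm. induction Hnm.
  - lra.
  - destruct (rseq_props k r0 m Hab Hcd) as [_ [I2 [_ [_ [I5 _]]]]].
    destruct (pick_half k (rseq k r0 m) I2 I5) as [J1 [J2 [J3 [J4 _]]]].
    simpl. lra.
Qed.

Lemma rseq_big k r0 n : ra r0 <= rb r0 -> rc r0 <= rd r0 -> cpt k (ra r0) (rb r0) (rc r0) (rd r0) ->
  Cmod (rectR k r0) / 4 ^ n <= Cmod (rectR k (rseq k r0 n)).
Proof.
  intros Hab Hcd H. induction n.
  - simpl. lra.
  - destruct (rseq_props k r0 n Hab Hcd) as [I1 [I2 [I3 [I4 [I5 [I6 _]]]]]].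
    assert (Hc : cpt k (ra (rseq k r0 n)) (rb (rseq k r0 n)) (rc (rseq k r0 n)) (rd (rseq k r0 n))).
    { eapply cpt_sub; [| | | |exact H]; lra. }
    pose proof (pick_big k (rseq k r0 n) I2 I5 Hc).
    simpl rseq. simpl pow. assert (0 < 4 ^ n) by (apply pow_lt; lra).
    replace (Cmod (rectR k r0) / (4 * 4 ^ n)) with (Cmod (rectR k r0) / 4 ^ n / 4) by (field; lra).
    lra.
Qed.

Lemma affine_CD (al be z : C) : CD (fun w => al + be * w)%C z be.
Proof.
  assert (H := CD_plus _ _ z _ _ (CD_const al z) (CD_scal _ be z _ (CD_id z))).
  intros eps Heps. destruct (H eps Heps) as [d [Hd Hh]]. exists d. split; auto.
  intros h Hh'. specialize (Hh h Hh'). replace (be * h)%C with ((0 + be * 1) * h)%C by ring. exact Hh.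
Qed.

Lemma cpt_affine al be a b c d : cpt (fun w => al + be * w)%C a b c d.
Proof. intros w _ _. exists be. apply affine_CD. Qed.

Lemma Cmod_le_sum (w p : C) : Cmod (w - p)%C <= Rabs (fst w - fst p) + Rabs (snd w - snd p).
Proof. destruct w, p. apply Cmod_pair_le. Qed.

Lemma goursat k a b c d : a <= b -> c <= d -> cpt k a b c d -> rect k a b c d = 0%C.
Proof.
  intros Hab Hcd H.
  set (r0 := mkR a b c d).
  assert (Hr0 : rect k a b c d = rectR k r0) by reflexivity.
  destruct (Req_dec (Cmod (rect k a b c d)) 0) as [E|E]; [apply Cmod_eq_0; auto|].
  exfalso. set (V := Cmod (rect k a b c d)) in *.
  assert (HV : 0 < V) by (pose proof (Cmod_ge_0 (rect k a b c d)); unfold V in *; lra).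
  assert (P := fun n => rseq_props k r0 n Hab Hcd).
  assert (Mo := fun n m => rseq_mono k r0 n m Hab Hcd).
  simpl in P, Mo.
  destruct (completeness (fun x => exists n, x = ra (rseq k r0 n))) as [p1 [Hp1u Hp1l]].
  { exists b. intros x [n ->]. destruct (P n) as [_ [? [? _]]]. lra. }
  { exists a. exists O. reflexivity. }
  destruct (completeness (fun x => exists n, x = rc (rseq k r0 n))) as [p2 [Hp2u Hp2l]].
  { exists d. intros x [n ->]. destruct (P n) as [_ [_ [_ [_ [? [? _]]]]]]. lra. }
  { exists c. exists O. reflexivity. }
  assert (Hp1 : forall n, ra (rseq k r0 n) <= p1 <= rb (rseq k r0 n)).
  { intros n. split. apply Hp1u. exists n; auto.
    apply Hp1l. intros x [m ->]. destruct (le_lt_dec n m) as [Hnm|Hnm].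
    - destruct (Mo n m Hnm) as [_ [? _]]. destruct (P m) as [_ [? _]]. lra.
    - destruct (Mo m n ltac:(lia)) as [? _]. destruct (P n) as [_ [? _]]. lra. }
  assert (Hp2 : forall n, rc (rseq k r0 n) <= p2 <= rd (rseq k r0 n)).
  { intros n. split. apply Hp2u. exists n; auto.
    apply Hp2l. intros x [m ->]. destruct (le_lt_dec n m) as [Hnm|Hnm].
    - destruct (Mo n m Hnm) as [_ [_ [_ ?]]]. destruct (P m) as [_ [_ [_ [_ [? _]]]]]. lra.
    - destruct (Mo m n ltac:(lia)) as [_ [_ [? _]]]. destruct (P n) as [_ [_ [_ [_ [? _]]]]]. lra. }
  set (p := (p1, p2) : C).
  destruct (H p) as [l Hl].
  { simpl. destruct (Hp1 O) as [? ?]. simpl in *. lra. }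
  { simpl. destruct (Hp2 O) as [? ?]. simpl in *. lra. }
  set (L := (b - a) + (d - c)).
  assert (HL : 0 <= L) by (unfold L; lra).
  set (eps := V / (8 * L * L + 1)).
  assert (Heps : 0 < eps) by (unfold eps; apply Rdiv_lt_0_compat; nra).
  destruct (Hl eps Heps) as [del [Hdel Hk]].
  destruct (small_pow L del Hdel) as [n Hn].
  set (rn := rseq k r0 n).
  destruct (P n) as [I1 [I2 [I3 [I4 [I5 [I6 [I7 I8]]]]]]]. fold rn in I1, I2, I3, I4, I5, I6, I7, I8.
  assert (H2n : 0 < 2 ^ n) by (apply pow_lt; lra).
  set (Ln := L / 2 ^ n).
  assert (HLn : 0 <= Ln) by (unfold Ln; apply Rmult_le_pos; auto; apply Rlt_le, Rinv_0_lt_compat; auto).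
  assert (Hsz : (rb rn - ra rn) + (rd rn - rc rn) = Ln) by (rewrite I7, I8; unfold Ln, L; field; lra).
  set (phi := (fun w : C => (1 * k w + (-1) * ((k p - l * p) + l * w))%C)).
  assert (Hcn : cpt k (ra rn) (rb rn) (rc rn) (rd rn)) by (eapply cpt_sub; [| | | |exact H]; lra).
  assert (Hphi : rectR k rn = rect phi (ra rn) (rb rn) (rc rn) (rd rn)).
  { unfold phi, rectR. rewrite rect_lin; auto.
    - rewrite rect_affine. ring.
    - apply cpt_bcont; auto.
    - apply cpt_bcont; auto. apply cpt_affine. }
  assert (Hpt : forall w : C, ra rn <= fst w <= rb rn -> rc rn <= snd w <= rd rn -> Cmod (phi w) <= eps * Ln).
  { intros w Hw1 Hw2.
    set (h := (w - p)%C).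
    assert (Hh : Cmod h <= Ln).
    { unfold h. eapply Rle_trans. apply Cmod_le_sum. simpl.
      pose proof (Hp1 n) as Q1. pose proof (Hp2 n) as Q2. fold rn in Q1, Q2.
      rewrite <- Hsz. unfold Rabs; repeat destruct Rcase_abs; lra. }
    assert (Hh2 : Cmod h < del) by (unfold Ln in Hh; lra).
    specialize (Hk h Hh2).
    replace (phi w) with (k (p + h) - k p - l * h)%C.
    - eapply Rle_trans. exact Hk. apply Rmult_le_compat_l; lra.
    - unfold phi, h. replace (p + (w - p))%C with w by ring. ring. }
  assert (Hb : Cmod (rectR k rn) <= 4 * Ln * (eps * Ln)).
  { rewrite Hphi. replace (4 * Ln * (eps * Ln)) with (4 * ((rb rn - ra rn) + (rd rn - rc rn)) * (eps * Ln)) by (rewrite Hsz; ring).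
    apply rect_bound; try lra.
    - apply cpt_bcont; try lra. intros w Hw1 Hw2.
      destruct (Hcn w Hw1 Hw2) as [l1 Hl1]. exists (1 * l1 + -1 * l)%C.
      apply CD_plus. apply CD_scal; auto. apply CD_scal. apply affine_CD.
    - intros x Hx. split; apply Hpt; simpl; lra.
    - intros y Hy. split; apply Hpt; simpl; lra. }
  assert (Hbig := rseq_big k r0 n Hab Hcd H). fold rn in Hbig. rewrite <- Hr0 in Hbig. fold V in Hbig.
  assert (H4n : 4 ^ n = 2 ^ n * 2 ^ n) by (rewrite <- Rpow_mult_distr; f_equal; lra).
  assert (Hfin : V <= 4 * eps * L * L).
  { assert (V / 4 ^ n <= 4 * Ln * (eps * Ln)) by lra.
    unfold Ln in H0. rewrite H4n in H0.
    replace (4 * (L / 2 ^ n) * (eps * (L / 2 ^ n))) with (4 * eps * L * L / (2 ^ n * 2 ^ n)) in H0 by (field; lra).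
    assert (0 < 2 ^ n * 2 ^ n) by nra.
    apply Rmult_le_reg_r with (/ (2 ^ n * 2 ^ n)). apply Rinv_0_lt_compat; auto.
    exact H0. }
  assert (4 * eps * L * L < V).
  { unfold eps. apply Rmult_lt_reg_r with (8 * L * L + 1). nra.
    replace (4 * (V / (8 * L * L + 1)) * L * L * (8 * L * L + 1)) with (4 * V * L * L) by (field; nra).
    nra. }
  lra.
Qed.

Lemma Cmod_zero_le (x : C) : (forall eps, 0 < eps -> Cmod x <= eps) -> x = 0%C.
Proof.
  intros H. apply Cmod_eq_0. pose proof (Cmod_ge_0 x).
  destruct (Req_dec (Cmod x) 0) as [E|E]; auto.
  specialize (H (Cmod x / 2) ltac:(lra)). lra.
Qed.

Lemma goursat_exc k a b c d (z : C) :
  a < fst z < b -> c < snd z < d ->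
  (forall w : C, a <= fst w <= b -> c <= snd w <= d -> w <> z -> exists l, CD k w l) ->
  (forall eps, 0 < eps -> exists del, 0 < del /\ forall w : C, w <> z -> Cmod (w - z)%C < del ->
       Cmod ((w - z) * k w)%C <= eps) ->
  rect k a b c d = 0%C.
Proof.
  intros Hz1 Hz2 HD Hlim.
  destruct z as [z1 z2]. simpl in Hz1, Hz2.
  assert (Hav : forall a' b' c' d', a <= a' -> b' <= b -> c <= c' -> d' <= d ->
     (z1 < a' \/ b' < z1 \/ z2 < c' \/ d' < z2) -> cpt k a' b' c' d').
  { intros a' b' c' d' H1 H2 H3 H4 H5 w Hw1 Hw2. apply HD; try lra.
    intros ->. simpl in *. lra. }
  assert (Hcw : forall w : C, a <= fst w <= b -> c <= snd w <= d -> w <> (z1, z2) -> Ccont k w).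
  { intros w H1 H2 H3. destruct (HD w H1 H2 H3) as [l Hl]. eapply CD_cont; eauto. }
  apply Cmod_zero_le. intros eps Heps.
  destruct (Hlim (eps / 16) ltac:(lra)) as [del [Hdel Hk]].
  set (r := Rmin (Rmin (del / 4) ((z1 - a) / 2)) (Rmin (Rmin ((b - z1) / 2) ((z2 - c) / 2)) ((d - z2) / 2))).
  assert (Hr : 0 < r) by (unfold r; repeat apply Rmin_pos; lra).
  assert (Hr1 : r <= del / 4) by (unfold r; repeat (eapply Rle_trans; [apply Rmin_l|]); lra).
  assert (Hr2 : r <= (z1 - a) / 2) by (unfold r; eapply Rle_trans; [apply Rmin_l|apply Rmin_r]).
  assert (Hr3 : r <= (b - z1) / 2) by (unfold r; eapply Rle_trans; [apply Rmin_r|]; eapply Rle_trans; [apply Rmin_l|apply Rmin_l]).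
  assert (Hr4 : r <= (z2 - c) / 2) by (unfold r; eapply Rle_trans; [apply Rmin_r|]; eapply Rle_trans; [apply Rmin_l|apply Rmin_r]).
  assert (Hr5 : r <= (d - z2) / 2) by (unfold r; eapply Rle_trans; [apply Rmin_r|apply Rmin_r]).
  set (x1 := z1 - r). set (x2 := z1 + r). set (y1 := z2 - r). set (y2 := z2 + r).
  assert (HhC : forall y u v, a <= u -> v <= b -> c <= y <= d -> y <> z2 -> hcont k u v y).
  { intros y u v H1 H2 H3 H4 x Hx. apply Hcw; simpl; try lra. intros E. inversion E. lra. }
  assert (HvC : forall x u v, c <= u -> v <= d -> a <= x <= b -> x <> z1 -> vcont k u v x).
  { intros x u v H1 H2 H3 H4 y Hy. apply Hcw; simpl; try lra. intros E. inversion E. lra. }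
  rewrite (split_x k a x1 b c d) by (try apply HhC; unfold x1; lra).
  rewrite (split_x k x1 x2 b c d) by (try apply HhC; unfold x1, x2; lra).
  rewrite (split_y k x1 x2 c y1 d) by (try apply HvC; unfold x1, x2, y1; lra).
  rewrite (split_y k x1 x2 y1 y2 d) by (try apply HvC; unfold x1, x2, y1, y2; lra).
  rewrite (goursat k a x1 c d), (goursat k x2 b c d), (goursat k x1 x2 c y1), (goursat k x1 x2 y2 d);
    try (apply Hav; unfold x1, x2, y1, y2; lra); try (unfold x1, x2, y1, y2; lra).
  replace (0 + (0 + (rect k x1 x2 y1 y2 + 0) + 0))%C with (rect k x1 x2 y1 y2) by ring.
  assert (Hbd : forall w : C, x1 <= fst w <= x2 -> y1 <= snd w <= y2 ->
     (fst w = x1 \/ fst w = x2 \/ snd w = y1 \/ snd w = y2) -> Cmod (k w) <= eps / 16 / r).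
  { intros w Hw1 Hw2 Hw3.
    assert (Hne : w <> (z1, z2)).
    { intros ->. simpl in Hw3. unfold x1, x2, y1, y2 in Hw3. lra. }
    assert (Hge : r <= Cmod (w - (z1, z2))%C).
    { destruct Hw3 as [E|[E|[E|E]]].
      - eapply Rle_trans; [|apply Rabs_fst_le]. simpl. rewrite E. unfold x1.
        replace (z1 - r + - z1) with (- r) by ring. rewrite Rabs_Ropp, Rabs_pos_eq; lra.
      - eapply Rle_trans; [|apply Rabs_fst_le]. simpl. rewrite E. unfold x2.
        replace (z1 + r + - z1) with r by ring. rewrite Rabs_pos_eq; lra.
      - eapply Rle_trans; [|apply Rabs_snd_le]. simpl. rewrite E. unfold y1.
        replace (z2 - r + - z2) with (- r) by ring. rewrite Rabs_Ropp, Rabs_pos_eq; lra.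
      - eapply Rle_trans; [|apply Rabs_snd_le]. simpl. rewrite E. unfold y2.
        replace (z2 + r + - z2) with r by ring. rewrite Rabs_pos_eq; lra. }
    assert (Hle : Cmod (w - (z1, z2))%C < del).
    { eapply Rle_lt_trans. apply Cmod_le_sum. simpl.
      unfold x1, x2, y1, y2 in *. unfold Rabs; repeat destruct Rcase_abs; lra. }
    specialize (Hk w Hne Hle). rewrite Cmod_mult in Hk.
    apply Rmult_le_reg_l with (Cmod (w - (z1, z2))%C). lra.
    apply Rle_trans with (eps / 16); auto.
    apply Rle_trans with (r * (eps / 16 / r)).
    - right. field. lra.
    - apply Rmult_le_compat_r; auto. apply Rlt_le, Rdiv_lt_0_compat; lra. }
  eapply Rle_trans. apply rect_bound with (B := eps / 16 / r); try (unfold x1, x2, y1, y2; lra).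
  - unfold bcont. unfold x1, x2, y1, y2 in *.
    split; [|split; [|split]].
    + apply HhC; lra.
    + apply HhC; lra.
    + apply HvC; lra.
    + apply HvC; lra.
  - intros x Hx. split; apply Hbd; simpl; auto; unfold y1, y2; lra.
  - intros y Hy. split; apply Hbd; simpl; auto; unfold x1, x2; lra.
  - unfold x1, x2, y1, y2. right. field. lra.
Qed.

Lemma CD_ext (f g : C -> C) z l : (forall w, f w = g w) -> CD f z l -> CD g z l.
Proof.
  intros E H. replace g with f; auto. apply functional_extensionality; auto.
Qed.

Lemma Ccont_ext (f g : C -> C) z : (forall w, f w = g w) -> Ccont f z -> Ccont g z.
Proof.
  intros E H. replace g with f; auto. apply functional_extensionality; auto.
Qed.

Lemma Ccont_plus (f g : C -> C) z : Ccont f z -> Ccont g z -> Ccont (fun w => f w + g w)%C z.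
Proof.
  intros Hf Hg eps Heps.
  destruct (Hf (eps/2)) as [d1 [Hd1 H1]]; [lra|].
  destruct (Hg (eps/2)) as [d2 [Hd2 H2]]; [lra|].
  exists (Rmin d1 d2). split; [apply Rmin_pos; auto|]. intros w Hw.
  specialize (H1 w (Rlt_le_trans _ _ _ Hw (Rmin_l _ _))).
  specialize (H2 w (Rlt_le_trans _ _ _ Hw (Rmin_r _ _))).
  replace (f w + g w - (f z + g z))%C with ((f w - f z) + (g w - g z))%C by ring.
  eapply Rle_lt_trans. apply Cmod_triangle. lra.
Qed.

Lemma Ccont_mult (f g : C -> C) z : Ccont f z -> Ccont g z -> Ccont (fun w => f w * g w)%C z.
Proof.
  intros Hf Hg eps Heps.
  set (F := Cmod (f z)). set (G := Cmod (g z)).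
  assert (HF : 0 <= F) by apply Cmod_ge_0. assert (HG : 0 <= G) by apply Cmod_ge_0.
  set (e1 := Rmin 1 (eps / (2 * (G + 1)))).
  assert (He1 : 0 < e1) by (unfold e1; apply Rmin_pos; [lra|apply Rdiv_lt_0_compat; lra]).
  destruct (Hf e1 He1) as [d1 [Hd1 H1]].
  destruct (Hg (eps / (2 * (F + 1)))) as [d2 [Hd2 H2]]; [apply Rdiv_lt_0_compat; lra|].
  exists (Rmin d1 d2). split; [apply Rmin_pos; auto|]. intros w Hw.
  specialize (H1 w (Rlt_le_trans _ _ _ Hw (Rmin_l _ _))).
  specialize (H2 w (Rlt_le_trans _ _ _ Hw (Rmin_r _ _))).
  replace (f w * g w - f z * g z)%C with ((f w - f z) * g w + f z * (g w - g z))%C by ring.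
  eapply Rle_lt_trans. apply Cmod_triangle. rewrite !Cmod_mult. fold F.
  assert (Hgw : Cmod (g w) <= G + eps / (2 * (F + 1))).
  { replace (g w) with (g z + (g w - g z))%C by ring. eapply Rle_trans. apply Cmod_triangle. fold G. lra. }
  assert (Hs : eps / (2 * (F + 1)) * (F + 1) = eps / 2) by (field; lra).
  assert (Hs2 : eps / (2 * (G + 1)) * (G + 1) = eps / 2) by (field; lra).
  assert (He1' : e1 <= eps / (2 * (G + 1))) by apply Rmin_r.
  assert (He1'' : e1 <= 1) by apply Rmin_l.
  pose proof (Cmod_ge_0 (f w - f z)%C). pose proof (Cmod_ge_0 (g w - g z)%C).
  assert (T1 : Cmod (f w - f z)%C * Cmod (g w) < eps / 2 + e1 * (eps / (2 * (F + 1)))).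
  { apply Rle_lt_trans with (e1 * (G + eps / (2 * (F + 1)))).
    - apply Rmult_le_compat; try lra. apply Cmod_ge_0.
    - assert (e1 * G <= eps / 2 - eps / (2 * (G + 1))).
      { apply Rle_trans with (eps / (2 * (G + 1)) * G). apply Rmult_le_compat_r; lra.
        right. field. lra. }
      assert (0 < eps / (2 * (G + 1))) by (apply Rdiv_lt_0_compat; lra).
      assert (0 < eps / (2 * (F + 1))) by (apply Rdiv_lt_0_compat; lra).
      nra. }
  assert (T2 : F * Cmod (g w - g z)%C <= eps / 2 - eps / (2 * (F + 1))).
  { apply Rle_trans with (F * (eps / (2 * (F + 1)))). apply Rmult_le_compat_l; lra.
    right. field. lra. }
  assert (e1 * (eps / (2 * (F + 1))) <= eps / (2 * (F + 1))).
  { assert (0 < eps / (2 * (F + 1))) by (apply Rdiv_lt_0_compat; lra). nra. }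
  lra.
Qed.

Lemma Ccont_const (c z : C) : Ccont (fun _ => c) z.
Proof. intros eps Heps. exists 1. split; [lra|]. intros. replace (c - c)%C with (RtoC 0) by ring.
  rewrite Cmod_R, Rabs_R0; lra. Qed.

Lemma Ccont_inv (f : C -> C) z : Ccont f z -> f z <> 0%C -> Ccont (fun w => / f w)%C z.
Proof.
  intros Hf Hz eps Heps.
  set (F := Cmod (f z)). assert (HF : 0 < F) by (apply Cmod_gt_0; auto).
  destruct (Hf (Rmin (F / 2) (eps * F * F / 2))) as [d [Hd H]].
  { apply Rmin_pos; [lra|]. apply Rdiv_lt_0_compat; [|lra]. repeat apply Rmult_lt_0_compat; lra. }
  exists d. split; auto. intros w Hw. specialize (H w Hw).
  assert (H1 : Cmod (f w - f z)%C < F / 2) by (eapply Rlt_le_trans; [apply H|apply Rmin_l]).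
  assert (H2 : Cmod (f w - f z)%C < eps * F * F / 2) by (eapply Rlt_le_trans; [apply H|apply Rmin_r]).
  assert (Hfw : F / 2 <= Cmod (f w)) by (apply Cmod_lower; fold F; lra).
  assert (Hfw0 : f w <> 0%C) by (apply Cmod_gt_0; lra).
  replace (/ f w - / f z)%C with ((f z - f w) / (f w * f z))%C by (field; auto).
  rewrite Cmod_div by (apply Cmult_neq_0; auto). rewrite Cmod_mult, Cmod_sub_sym. fold F.
  apply Rlt_le_trans with ((eps * F * F / 2) / (F / 2 * F)).
  - unfold Rdiv at 1. apply Rle_lt_trans with (Cmod (f w - f z)%C * / (F / 2 * F)).
    + apply Rmult_le_compat_l. apply Cmod_ge_0. apply Rinv_le_contravar. nra. nra.
    + apply Rmult_lt_compat_r; auto. apply Rinv_0_lt_compat. nra.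
  - right. field. lra.
Qed.

Lemma Ccont_local (f g : C -> C) z r : 0 < r -> (forall w, Cmod (w - z)%C < r -> f w = g w) ->
  Ccont f z -> Ccont g z.
Proof.
  intros Hr E H eps Heps. destruct (H eps Heps) as [d [Hd Hw]].
  exists (Rmin d r). split; [apply Rmin_pos; auto|]. intros w Hwz.
  rewrite <- !E. apply Hw. eapply Rlt_le_trans; [apply Hwz|apply Rmin_l].
  replace (z - z)%C with (RtoC 0) by ring. rewrite Cmod_R, Rabs_R0. lra.
  eapply Rlt_le_trans; [apply Hwz|apply Rmin_r].
Qed.

Lemma Ccont_id (z : C) : Ccont (fun w => w) z.
Proof. intros eps Heps. exists eps. split; auto. Qed.

Lemma Ccont_sub_const (z0 z : C) : Ccont (fun w => w - z0)%C z.
Proof. apply (Ccont_plus (fun w => w) (fun _ => - z0)%C). apply Ccont_id. apply Ccont_const. Qed.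

Lemma CD_sub_const (z0 z : C) : CD (fun w => w - z0)%C z 1%C.
Proof.
  apply CD_ext with (fun w => w + (- z0))%C; [intros; ring|].
  assert (H := CD_plus _ _ z _ _ (CD_id z) (CD_const (- z0)%C z)).
  intros eps Heps. destruct (H eps Heps) as [d [Hd Hh]]. exists d; split; auto.
  intros h Hh'. specialize (Hh h Hh'). replace (1 * h)%C with ((1 + 0) * h)%C by ring. exact Hh.
Qed.

Lemma rect_ext k1 k2 a b c d : (forall w, k1 w = k2 w) -> rect k1 a b c d = rect k2 a b c d.
Proof. intros E. replace k2 with k1; auto. apply functional_extensionality; auto. Qed.

Definition onS (a b c d : R) (w : C) :=
  a <= fst w <= b /\ c <= snd w <= d /\ (fst w = a \/ fst w = b \/ snd w = c \/ snd w = d).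

Ltac disj4 := solve [left; reflexivity | right; left; reflexivity | right; right; left; reflexivity | right; right; right; reflexivity].

Lemma bcont_onS k a b c d : a <= b -> c <= d -> (forall w, onS a b c d w -> Ccont k w) -> bcont k a b c d.
Proof.
  intros Hab Hcd H. unfold bcont, hcont, vcont. split; [|split; [|split]]; intros t Ht; apply H;
  unfold onS; simpl; (split; [lra|split; [lra|disj4]]).
Qed.

Lemma rect_bound_onS k a b c d B : a <= b -> c <= d -> (forall w, onS a b c d w -> Ccont k w) ->
  (forall w, onS a b c d w -> Cmod (k w) <= B) ->
  Cmod (rect k a b c d) <= 4 * ((b - a) + (d - c)) * B.
Proof.
  intros Hab Hcd Hc HB. apply rect_bound; auto. apply bcont_onS; auto.
  - intros x Hx. split; apply HB; unfold onS; simpl; (split; [lra|split; [lra|disj4]]).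
  - intros y Hy. split; apply HB; unfold onS; simpl; (split; [lra|split; [lra|disj4]]).
Qed.

Section Square.
Variables (u0 v0 rho : R).
Hypothesis Hrho : 0 < rho.
Let z0 : C := (u0, v0).
Let a := u0 - rho.
Let b := u0 + rho.
Let c := v0 - rho.
Let d := v0 + rho.

Lemma onS_far (w : C) : onS a b c d w -> rho <= Cmod (w - z0)%C /\ Cmod (w - z0)%C <= 2 * rho.
Proof.
  unfold onS, a, b, c, d, z0. intros [H1 [H2 H3]]. split.
  - destruct H3 as [E|[E|[E|E]]].
    + eapply Rle_trans; [|apply Rabs_fst_le]. simpl. rewrite E.
      replace (u0 - rho + - u0) with (- rho) by ring. rewrite Rabs_Ropp, Rabs_pos_eq; lra.
    + eapply Rle_trans; [|apply Rabs_fst_le]. simpl. rewrite E.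
      replace (u0 + rho + - u0) with rho by ring. rewrite Rabs_pos_eq; lra.
    + eapply Rle_trans; [|apply Rabs_snd_le]. simpl. rewrite E.
      replace (v0 - rho + - v0) with (- rho) by ring. rewrite Rabs_Ropp, Rabs_pos_eq; lra.
    + eapply Rle_trans; [|apply Rabs_snd_le]. simpl. rewrite E.
      replace (v0 + rho + - v0) with rho by ring. rewrite Rabs_pos_eq; lra.
  - eapply Rle_trans. apply Cmod_le_sum. simpl. unfold Rabs; repeat destruct Rcase_abs; lra.
Qed.

Lemma onS_far_z (w z : C) : onS a b c d w -> Cmod (z - z0)%C < rho / 2 ->
  rho / 2 <= Cmod (w - z)%C /\ Cmod (w - z)%C <= 3 * rho.
Proof.
  intros Hw Hz. destruct (onS_far w Hw) as [H1 H2].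
  pose proof (Cmod_triangle (w - z) (z - z0)). pose proof (Cmod_triangle (w - z0) (z0 - z)).
  replace (w - z + (z - z0))%C with (w - z0)%C in H by ring.
  replace (w - z0 + (z0 - z))%C with (w - z)%C in H0 by ring.
  rewrite (Cmod_sub_sym z0 z) in H0. lra.
Qed.

Lemma inS_z (z : C) : Cmod (z - z0)%C < rho / 2 -> a < fst z < b /\ c < snd z < d.
Proof.
  intros H. pose proof (Rabs_fst_le (z - z0)%C). pose proof (Rabs_snd_le (z - z0)%C).
  unfold a, b, c, d, z0 in *. simpl in *.
  unfold Rabs in *; repeat destruct Rcase_abs; lra.
Qed.

Lemma param_cont (g q : C -> C) (Bg Lq : R) :
  (forall w, onS a b c d w -> Ccont g w) ->
  (forall w, onS a b c d w -> Cmod (g w) <= Bg) ->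
  (forall z, Cmod (z - z0)%C < rho / 2 -> forall w, onS a b c d w -> Ccont (fun w => q (w - z)%C) w) ->
  (forall z, Cmod (z - z0)%C < rho / 2 -> forall w, onS a b c d w ->
     Cmod (q (w - z) - q (w - z0))%C <= Lq * Cmod (z - z0)%C) ->
  Ccont (fun z => rect (fun w => g w * q (w - z))%C a b c d) z0.
Proof.
  intros Hg HBg Hq HL eps Heps.
  assert (HBg0 : 0 <= Bg).
  { eapply Rle_trans; [apply Cmod_ge_0|apply (HBg (a, c))]. unfold onS; simpl; unfold a, b, c, d; (split; [lra|split; [lra|disj4]]). }
  set (K := 16 * rho * Bg * (Rabs Lq) + 1).
  assert (HK : 0 < K).
  { unfold K. assert (0 <= 16 * rho * Bg * Rabs Lq) by (repeat apply Rmult_le_pos; try lra; apply Rabs_pos). lra. }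
  exists (Rmin (rho / 2) (eps / K)). split; [apply Rmin_pos; [lra|apply Rdiv_lt_0_compat; auto]|].
  intros z Hz.
  assert (Hz1 : Cmod (z - z0)%C < rho / 2) by (eapply Rlt_le_trans; [apply Hz|apply Rmin_l]).
  assert (Hz2 : Cmod (z - z0)%C < eps / K) by (eapply Rlt_le_trans; [apply Hz|apply Rmin_r]).
  assert (Hz0 : Cmod (z0 - z0)%C < rho / 2).
  { replace (z0 - z0)%C with (RtoC 0) by ring. rewrite Cmod_R, Rabs_R0. lra. }
  assert (Hc1 : forall w, onS a b c d w -> Ccont (fun w => g w * q (w - z))%C w).
  { intros w Hw. apply (Ccont_mult g (fun w => q (w - z)%C)); auto. }
  assert (Hc2 : forall w, onS a b c d w -> Ccont (fun w => g w * q (w - z0))%C w).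
  { intros w Hw. apply (Ccont_mult g (fun w => q (w - z0)%C)); auto. }
  replace (rect (fun w => g w * q (w - z))%C a b c d - rect (fun w => g w * q (w - z0))%C a b c d)%C
    with (rect (fun w => 1 * (g w * q (w - z)) + (-1) * (g w * q (w - z0)))%C a b c d).
  2:{ rewrite rect_lin; try (unfold a, b, c, d; lra); try (apply bcont_onS; auto; unfold a, b, c, d; lra). ring. }
  eapply Rle_lt_trans.
  apply rect_bound_onS with (B := Bg * (Rabs Lq * Cmod (z - z0)%C)); try (unfold a, b, c, d; lra).
  - intros w Hw. apply (Ccont_plus (fun w => 1 * (g w * q (w - z)))%C (fun w => -1 * (g w * q (w - z0)))%C).
    + apply (Ccont_mult (fun _ => 1%C)). apply Ccont_const. auto.
    + apply (Ccont_mult (fun _ => (-1)%C)). apply Ccont_const. auto.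
  - intros w Hw.
    replace (1 * (g w * q (w - z)) + -1 * (g w * q (w - z0)))%C with (g w * (q (w - z) - q (w - z0)))%C by ring.
    rewrite Cmod_mult. apply Rmult_le_compat; try apply Cmod_ge_0; auto.
    eapply Rle_trans. apply HL; auto. apply Rmult_le_compat_r. apply Cmod_ge_0. apply Rle_abs.
  - unfold a, b, c, d.
    replace (4 * (u0 + rho - (u0 - rho) + (v0 + rho - (v0 - rho))) * (Bg * (Rabs Lq * Cmod (z - z0)%C)))
      with ((K - 1) * Cmod (z - z0)%C) by (unfold K; ring).
    pose proof (Cmod_ge_0 (z - z0)%C).
    apply Rle_lt_trans with (K * Cmod (z - z0)%C). nra.
    apply Rmult_lt_reg_l with (/ K). apply Rinv_0_lt_compat; auto.
    rewrite <- Rmult_assoc, Rinv_l by lra. unfold Rdiv in Hz2. lra.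
Qed.

End Square.

Lemma CD_sub_c (f : C -> C) (z l c : C) : CD f z l -> CD (fun w => f w - c)%C z l.
Proof.
  intros H. apply CD_ext with (fun w => f w + (- c))%C; [intros; ring|].
  assert (H2 := CD_plus _ _ z _ _ H (CD_const (- c)%C z)).
  intros eps Heps. destruct (H2 eps Heps) as [d [Hd Hh]]. exists d; split; auto.
  intros h Hh'. specialize (Hh h Hh'). replace (l * h)%C with ((l + 0) * h)%C by ring. exact Hh.
Qed.

Lemma sq_neq0 (u : C) : u <> 0%C -> (u * u)%C <> 0%C.
Proof. intros H. apply Cmult_neq_0; auto. Qed.

Lemma sub_neq0 (w z : C) : w <> z -> (w - z)%C <> 0%C.
Proof. intros H E. apply H. replace w with ((w - z) + z)%C by ring. rewrite E. ring. Qed.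

Section Square2.
Variables (u0 v0 rho : R).
Hypothesis Hrho : 0 < rho.
Let z0 : C := (u0, v0).
Let a := u0 - rho.
Let b := u0 + rho.
Let c := v0 - rho.
Let d := v0 + rho.

Lemma lip_inv (w z : C) : onS a b c d w -> Cmod (z - z0)%C < rho / 2 ->
  Cmod (/ (w - z) - / (w - z0))%C <= 4 / (rho * rho) * Cmod (z - z0)%C.
Proof.
  intros Hw Hz.
  destruct (onS_far_z u0 v0 rho Hrho w z Hw Hz) as [H1 H2].
  destruct (onS_far u0 v0 rho Hrho w Hw) as [H3 H4]. fold z0 in H3, H4.
  assert (Hu : (w - z)%C <> 0%C) by (apply Cmod_gt_0; lra).
  assert (Hv : (w - z0)%C <> 0%C) by (apply Cmod_gt_0; lra).
  replace (/ (w - z) - / (w - z0))%C with ((z - z0) / ((w - z) * (w - z0)))%C by (field; auto).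
  rewrite Cmod_div by (apply Cmult_neq_0; auto). rewrite Cmod_mult.
  unfold Rdiv. apply Rle_trans with (Cmod (z - z0)%C * / (rho / 2 * rho)).
  - apply Rmult_le_compat_l. apply Cmod_ge_0. apply Rinv_le_contravar. nra.
    apply Rmult_le_compat; lra.
  - assert (0 <= Cmod (z - z0)%C) by apply Cmod_ge_0.
    apply Rle_trans with (2 / (rho * rho) * Cmod (z - z0)%C).
    + right. field. lra.
    + apply Rmult_le_compat_r; auto. unfold Rdiv. apply Rmult_le_compat_r. apply Rlt_le, Rinv_0_lt_compat. nra. lra.
Qed.

Lemma lip_inv2 (w z : C) : onS a b c d w -> Cmod (z - z0)%C < rho / 2 ->
  Cmod (/ ((w - z) * (w - z)) - / ((w - z0) * (w - z0)))%C <= 20 / (rho * rho * rho) * Cmod (z - z0)%C.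
Proof.
  intros Hw Hz.
  destruct (onS_far_z u0 v0 rho Hrho w z Hw Hz) as [H1 H2].
  destruct (onS_far u0 v0 rho Hrho w Hw) as [H3 H4]. fold z0 in H3, H4.
  assert (Hu : (w - z)%C <> 0%C) by (apply Cmod_gt_0; lra).
  assert (Hv : (w - z0)%C <> 0%C) by (apply Cmod_gt_0; lra).
  replace (/ ((w - z) * (w - z)) - / ((w - z0) * (w - z0)))%C with
    ((z - z0) * ((w - z0) + (w - z)) / ((w - z) * (w - z) * ((w - z0) * (w - z0))))%C by (field; auto).
  rewrite Cmod_div by (repeat apply Cmult_neq_0; auto). rewrite !Cmod_mult.
  set (U := Cmod (w - z)%C) in *. set (V := Cmod (w - z0)%C) in *.
  assert (HS : Cmod (w - z0 + (w - z))%C <= 5 * rho).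
  { eapply Rle_trans. apply Cmod_triangle. fold U V. lra. }
  pose proof (Cmod_ge_0 (z - z0)%C). pose proof (Cmod_ge_0 (w - z0 + (w - z))%C).
  assert (HUV : rho * rho * rho * rho / 4 <= U * U * (V * V)).
  { assert (rho / 2 * (rho / 2) <= U * U) by nra. assert (rho * rho <= V * V) by nra.
    replace (rho * rho * rho * rho / 4) with (rho / 2 * (rho / 2) * (rho * rho)) by field.
    apply Rmult_le_compat; nra. }
  assert (Hp : 0 < rho * rho * rho * rho / 4) by (apply Rdiv_lt_0_compat; [repeat apply Rmult_lt_0_compat|]; lra).
  unfold Rdiv. apply Rle_trans with (Cmod (z - z0)%C * (5 * rho) * / (rho * rho * rho * rho / 4)).
  - apply Rmult_le_compat. apply Rmult_le_pos; auto. apply Rlt_le, Rinv_0_lt_compat. nra.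
    apply Rmult_le_compat_l; auto. apply Rinv_le_contravar; auto.
  - right. field. lra.
Qed.

Lemma cont_q1 (z w : C) : w <> z -> Ccont (fun w => / (w - z))%C w.
Proof. intros H. apply (Ccont_inv (fun w => w - z)%C). apply Ccont_sub_const. apply sub_neq0; auto. Qed.

Lemma cont_q2 (z w : C) : w <> z -> Ccont (fun w => / ((w - z) * (w - z)))%C w.
Proof.
  intros H. apply (Ccont_inv (fun w => (w - z) * (w - z))%C).
  apply (Ccont_mult (fun w => w - z)%C (fun w => w - z)%C); apply Ccont_sub_const.
  apply sq_neq0, sub_neq0; auto.
Qed.

Lemma onS_neq (w z : C) : onS a b c d w -> Cmod (z - z0)%C < rho / 2 -> w <> z.
Proof.
  intros Hw Hz E. destruct (onS_far_z u0 v0 rho Hrho w z Hw Hz) as [H1 _].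
  rewrite E in H1. replace (z - z)%C with (RtoC 0) in H1 by ring. rewrite Cmod_R, Rabs_R0 in H1. lra.
Qed.

Definition Ir (z : C) := rect (fun w => 1 * / (w - z))%C a b c d.
Definition Jr (z : C) := rect (fun w => 1 * / ((w - z) * (w - z)))%C a b c d.
Definition K1 (f : C -> C) (z : C) := rect (fun w => f w * / ((w - z) * (w - z)))%C a b c d.

Lemma z0_in : Cmod (z0 - z0)%C < rho / 2.
Proof. replace (z0 - z0)%C with (RtoC 0) by ring. rewrite Cmod_R, Rabs_R0. lra. Qed.

Lemma Ir_cont : Ccont Ir z0.
Proof.
  apply (param_cont u0 v0 rho Hrho (fun _ => 1%C) (fun u => / u)%C 1 (4 / (rho * rho))).
  - intros; apply Ccont_const.
  - intros. rewrite Cmod_1. lra.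
  - intros z Hz w Hw. apply cont_q1. eapply onS_neq; eauto.
  - intros z Hz w Hw. apply lip_inv; auto.
Qed.

Lemma Jr_cont : Ccont Jr z0.
Proof.
  apply (param_cont u0 v0 rho Hrho (fun _ => 1%C) (fun u => / (u * u))%C 1 (20 / (rho * rho * rho))).
  - intros; apply Ccont_const.
  - intros. rewrite Cmod_1. lra.
  - intros z Hz w Hw. apply cont_q2. eapply onS_neq; eauto.
  - intros z Hz w Hw. apply lip_inv2; auto.
Qed.

Lemma K1_cont (f : C -> C) (Bf : R) : (forall w, onS a b c d w -> Ccont f w) ->
  (forall w, onS a b c d w -> Cmod (f w) <= Bf) -> Ccont (K1 f) z0.
Proof.
  intros Hc HB.
  apply (param_cont u0 v0 rho Hrho f (fun u => / (u * u))%C Bf (20 / (rho * rho * rho))); auto.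
  - intros z Hz w Hw. apply cont_q2. eapply onS_neq; eauto.
  - intros z Hz w Hw. apply lip_inv2; auto.
Qed.


Lemma repr (f f' : C -> C) (z : C) :
  (forall w : C, a <= fst w <= b -> c <= snd w <= d -> CD f w (f' w)) ->
  Cmod (z - z0)%C < rho / 2 -> (f' z * Ir z = K1 f z + (- f z) * Jr z)%C.
Proof.
  intros HD Hz. destruct (inS_z u0 v0 rho Hrho z Hz) as [Hz1 Hz2]. fold a b c d in Hz1, Hz2.
  set (k := fun w => (1 * ((f w - f z) * / ((w - z) * (w - z))) + (- f' z) * (1 * / (w - z)))%C).
  assert (Hk0 : rect k a b c d = 0%C).
  { apply goursat_exc with z; auto.
    - intros w Hw1 Hw2 Hne. eexists. unfold k. apply CD_plus; apply CD_scal.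
      + apply CD_mult. apply CD_sub_c. apply HD; auto.
        apply CD_inv. apply CD_mult; apply CD_sub_const. apply sq_neq0, sub_neq0; auto.
      + apply CD_scal. apply CD_inv. apply CD_sub_const. apply sub_neq0; auto.
    - intros eps Heps. destruct (HD z ltac:(lra) ltac:(lra) eps Heps) as [del [Hdel Hh]].
      exists del. split; auto. intros w Hne Hw.
      set (h := (w - z)%C) in *. assert (Hh0 : h <> 0%C) by (apply sub_neq0; auto).
      specialize (Hh h Hw). replace (z + h)%C with w in Hh by (unfold h; ring).
      replace (h * k w)%C with ((f w - f z - f' z * h) / h)%C.
      + rewrite Cmod_div by auto. apply Rmult_le_reg_r with (Cmod h). apply Cmod_gt_0; auto.
        unfold Rdiv. rewrite Rmult_assoc, Rinv_l. lra. apply Rgt_not_eq, Cmod_gt_0; auto.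
      + unfold k. replace w with (z + h)%C by (unfold h; ring).
        replace (z + h - z)%C with h by ring. field. auto. }
  assert (HonS : forall w, onS a b c d w -> w <> z).
  { intros w Hw. apply (onS_neq w z Hw Hz). }
  assert (Hfc : forall w, onS a b c d w -> Ccont f w).
  { intros w [Hw1 [Hw2 _]]. eapply CD_cont. apply HD; auto. }
  assert (Hab : a <= b) by (unfold a, b; lra). assert (Hcd : c <= d) by (unfold c, d; lra).
  unfold k in Hk0. rewrite rect_lin in Hk0; auto.
  2:{ apply bcont_onS; auto. intros w Hw.
      apply (Ccont_mult (fun w => f w - f z)%C (fun w => / ((w - z) * (w - z)))%C).
      - apply (Ccont_plus f (fun _ => - f z)%C); auto. apply Ccont_const.
      - apply cont_q2; auto. }
  2:{ apply bcont_onS; auto. intros w Hw.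
      apply (Ccont_mult (fun _ => 1%C) (fun w => / (w - z))%C). apply Ccont_const. apply cont_q1; auto. }
  rewrite (rect_ext _ (fun w => 1 * (f w * / ((w - z) * (w - z))) + (- f z) * (1 * / ((w - z) * (w - z))))%C)
    in Hk0 by (intros; ring).
  rewrite rect_lin in Hk0; auto.
  2:{ apply bcont_onS; auto. intros w Hw.
      apply (Ccont_mult f (fun w => / ((w - z) * (w - z)))%C); auto. apply cont_q2; auto. }
  2:{ apply bcont_onS; auto. intros w Hw.
      apply (Ccont_mult (fun _ => 1%C) (fun w => / ((w - z) * (w - z)))%C). apply Ccont_const. apply cont_q2; auto. }
  unfold Ir, K1, Jr. fold a b c d.
  set (KK := rect (fun w => f w * / ((w - z) * (w - z)))%C a b c d) in *.
  set (JJ := rect (fun w => 1 * / ((w - z) * (w - z)))%C a b c d) in *.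
  set (II := rect (fun w => 1 * / (w - z))%C a b c d) in *.
  replace (f' z * II)%C with (f' z * II + (1 * (1 * KK + - f z * JJ) + - f' z * II))%C by (rewrite Hk0; ring).
  ring.
Qed.

Lemma RInt_ge_const (g : R -> R) (p q m : R) : p <= q -> ex_RInt g p q ->
  (forall x, p <= x <= q -> m <= g x) -> m * (q - p) <= RInt g p q.
Proof.
  intros Hpq Hex H.
  replace (m * (q - p)) with (RInt (fun _ => m) p q) by (rewrite RInt_const; unfold scal; simpl; unfold mult; simpl; ring).
  apply RInt_le; auto. apply ex_RInt_const. intros x Hx. apply H; lra.
Qed.

Lemma RInt_le_const (g : R -> R) (p q m : R) : p <= q -> ex_RInt g p q ->
  (forall x, p <= x <= q -> g x <= m) -> RInt g p q <= m * (q - p).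
Proof.
  intros Hpq Hex H.
  replace (m * (q - p)) with (RInt (fun _ => m) p q) by (rewrite RInt_const; unfold scal; simpl; unfold mult; simpl; ring).
  apply RInt_le; auto. apply ex_RInt_const. intros x Hx. apply H; lra.
Qed.

Lemma inv_comp (p q : R) : 0 < p * p + q * q ->
  fst (1 * / (p, q))%C = p / (p * p + q * q) /\ snd (1 * / (p, q))%C = - q / (p * p + q * q).
Proof. intros H. simpl. split; field; lra. Qed.

Lemma sq_pos_q (p q : R) : 0 < q * q -> 0 < p * p + q * q.
Proof. intros H. pose proof (Rle_0_sqr p). unfold Rsqr in *. lra. Qed.
Lemma sq_pos_p (p q : R) : 0 < p * p -> 0 < p * p + q * q.
Proof. intros H. pose proof (Rle_0_sqr q). unfold Rsqr in *. lra. Qed.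

Lemma snd_rect_form (p q r s : C) : snd (p + Ci * q - r - Ci * s)%C = snd p + fst q - snd r - fst s.
Proof. destruct p, q, r, s. unfold Ci. simpl. ring. Qed.

Lemma Ir_nz : Ir z0 <> 0%C.
Proof.
  assert (Hab : a <= b) by (unfold a, b; lra). assert (Hcd : c <= d) by (unfold c, d; lra).
  assert (Hcont : bcont (fun w => 1 * / (w - z0))%C a b c d).
  { apply bcont_onS; auto. intros w Hw.
    apply (Ccont_mult (fun _ => 1%C) (fun w => / (w - z0))%C). apply Ccont_const. apply cont_q1.
    apply (onS_neq w z0 Hw z0_in). }
  destruct Hcont as [H1 [H2 [H3 H4]]].
  destruct (hcont_ex _ a b c Hab H1) as [_ E1].
  destruct (hcont_ex _ a b d Hab H2) as [_ E2].
  destruct (vcont_ex _ c d a Hcd H3) as [E3 _].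
  destruct (vcont_ex _ c d b Hcd H4) as [E4 _].
  assert (Hpos : 0 < 1 / (2 * rho)) by (apply Rdiv_lt_0_compat; lra).
  assert (Key : forall t, - rho <= t <= rho -> 1 / (2 * rho) <= rho / (t * t + rho * rho)).
  { intros t Ht. assert (t * t <= rho * rho) by nra.
    apply Rle_trans with (rho / (rho * rho + rho * rho)).
    - right. field; repeat split; nra.
    - unfold Rdiv. apply Rmult_le_compat_l. lra. apply Rinv_le_contravar; nra. }
  assert (G1 : 1 / (2 * rho) * (b - a) <= RInt (fun x => snd (1 * / ((x, c) - z0))%C) a b).
  { apply RInt_ge_const; auto. intros x Hx. unfold z0, c.
    replace ((x, (v0 - rho)%R) - (u0, v0))%C with ((x - u0), - rho) by (apply injective_projections; simpl; ring).
    rewrite (proj2 (inv_comp (x - u0) (- rho) (sq_pos_q (x - u0) (- rho) ltac:(nra)))). replace (- - rho) with rho by ring.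
    replace (- rho * - rho) with (rho * rho) by ring. apply Key. unfold a, b in Hx. lra. }
  assert (G2 : RInt (fun x => snd (1 * / ((x, d) - z0))%C) a b <= - (1 / (2 * rho)) * (b - a)).
  { apply RInt_le_const; auto. intros x Hx. unfold z0, d.
    replace ((x, (v0 + rho)%R) - (u0, v0))%C with ((x - u0), rho) by (apply injective_projections; simpl; ring).
    rewrite (proj2 (inv_comp (x - u0) rho (sq_pos_q (x - u0) rho ltac:(nra)))).
    assert (1 / (2 * rho) <= rho / ((x - u0) * (x - u0) + rho * rho)) by (apply Key; unfold a, b in Hx; lra).
    unfold Rdiv in *. lra. }
  assert (G3 : RInt (fun y => fst (1 * / ((a, y) - z0))%C) c d <= - (1 / (2 * rho)) * (d - c)).
  { apply RInt_le_const; auto. intros y Hy. unfold z0, a.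
    replace (((u0 - rho)%R, y) - (u0, v0))%C with (- rho, (y - v0)) by (apply injective_projections; simpl; ring).
    rewrite (proj1 (inv_comp (- rho) (y - v0) (sq_pos_p (- rho) (y - v0) ltac:(nra)))).
    assert (1 / (2 * rho) <= rho / ((y - v0) * (y - v0) + rho * rho)) by (apply Key; unfold c, d in Hy; lra).
    replace (- rho * - rho + (y - v0) * (y - v0)) with ((y - v0) * (y - v0) + rho * rho) by ring.
    unfold Rdiv in *. lra. }
  assert (G4 : 1 / (2 * rho) * (d - c) <= RInt (fun y => fst (1 * / ((b, y) - z0))%C) c d).
  { apply RInt_ge_const; auto. intros y Hy. unfold z0, b.
    replace (((u0 + rho)%R, y) - (u0, v0))%C with (rho, (y - v0)) by (apply injective_projections; simpl; ring).
    rewrite (proj1 (inv_comp rho (y - v0) (sq_pos_p rho (y - v0) ltac:(nra)))).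
    replace (rho * rho + (y - v0) * (y - v0)) with ((y - v0) * (y - v0) + rho * rho) by ring.
    apply Key. unfold c, d in Hy. lra. }
  intros E. assert (Hs := f_equal snd E). unfold Ir, rect in Hs. rewrite snd_rect_form in Hs.
  unfold hseg, vseg in Hs. cbn [fst snd] in Hs. fold a b c d z0 in Hs.
  assert (Hba : b - a = 2 * rho) by (unfold a, b; ring). assert (Hdc : d - c = 2 * rho) by (unfold c, d; ring).
  rewrite Hba in G1, G2. rewrite Hdc in G3, G4.
  replace (1 / (2 * rho) * (2 * rho)) with 1 in G1, G4 by (field; lra).
  replace (- (1 / (2 * rho)) * (2 * rho)) with (-1) in G2, G3 by (field; lra).
  change (snd (RtoC 0)) with 0 in Hs. lra.
Qed.

Lemma fprime_cont (f f' : C -> C) (Bf : R) :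
  (forall w : C, a <= fst w <= b -> c <= snd w <= d -> CD f w (f' w)) ->
  (forall w, onS a b c d w -> Cmod (f w) <= Bf) -> Ccont f' z0.
Proof.
  intros HD HB.
  assert (Hfc : forall w, onS a b c d w -> Ccont f w).
  { intros w [Hw1 [Hw2 _]]. eapply CD_cont. apply HD; auto. }
  assert (Hf0 : Ccont f z0) by (eapply CD_cont; apply HD; unfold z0, a, b, c, d; simpl; lra).
  set (N := fun z => (K1 f z + (- f z) * Jr z)%C).
  assert (HN : Ccont N z0).
  { apply (Ccont_plus (K1 f) (fun z => - f z * Jr z)%C).
    - apply K1_cont with Bf; auto.
    - apply (Ccont_mult (fun z => - f z)%C Jr).
      + apply Ccont_ext with (fun z => (-1) * f z)%C; [intros; ring|].
        apply (Ccont_mult (fun _ => (-1)%C) f); auto. apply Ccont_const.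
      + apply Jr_cont. }
  assert (HI := Ir_cont). assert (HI0 := Ir_nz).
  destruct (HI (Cmod (Ir z0))) as [del [Hdel Hdw]]. apply Cmod_gt_0; auto.
  apply (Ccont_local (fun z => N z * / Ir z)%C f' z0 (Rmin (rho / 2) del)).
  - apply Rmin_pos; lra.
  - intros w Hw.
    assert (Hw1 : Cmod (w - z0)%C < rho / 2) by (eapply Rlt_le_trans; [apply Hw|apply Rmin_l]).
    assert (Hw2 : Cmod (w - z0)%C < del) by (eapply Rlt_le_trans; [apply Hw|apply Rmin_r]).
    assert (HIw : Ir w <> 0%C).
    { intros E. specialize (Hdw w Hw2). rewrite E in Hdw.
      replace (0 - Ir z0)%C with (- Ir z0)%C in Hdw by ring. rewrite Cmod_opp in Hdw. lra. }
    assert (Hr := repr f f' w HD Hw1). unfold N. rewrite <- Hr. field. auto.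
  - apply (Ccont_mult N (fun z => / Ir z)%C); auto. apply (Ccont_inv Ir); auto.
Qed.

End Square2.

Definition PD (phi : R -> C) (t : R) (l : C) : Prop :=
  forall eps, 0 < eps -> exists delta, 0 < delta /\
    forall h : R, Rabs h < delta -> Cmod (phi (t + h)%R - phi t - l * RtoC h)%C <= eps * Rabs h.

Definition Pcont (phi : R -> C) (t : R) : Prop :=
  forall eps, 0 < eps -> exists delta, 0 < delta /\
    forall s : R, Rabs (s - t) < delta -> Cmod (phi s - phi t)%C < eps.

Lemma dpl_bound (f : R -> R) t l eps : derivable_pt_lim f t l -> 0 < eps ->
  exists delta, 0 < delta /\ forall h, Rabs h < delta -> Rabs (f (t + h) - f t - l * h) <= eps * Rabs h.
Proof.
  intros H Heps. destruct (H eps Heps) as [d Hd]. exists d. split; [apply cond_pos|].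
  intros h Hh. destruct (Req_dec h 0) as [->|Hn].
  - rewrite Rplus_0_r. replace (f t - f t - l * 0) with 0 by ring. rewrite Rabs_R0. lra.
  - specialize (Hd h Hn Hh).
    replace (f (t + h) - f t - l * h) with (((f (t + h) - f t) / h - l) * h) by (field; auto).
    rewrite Rabs_mult. apply Rmult_le_compat_r. apply Rabs_pos. lra.
Qed.

Lemma PD_of_comp (phi : R -> C) t (l : C) :
  derivable_pt_lim (fun s => fst (phi s)) t (fst l) ->
  derivable_pt_lim (fun s => snd (phi s)) t (snd l) -> PD phi t l.
Proof.
  intros H1 H2 eps Heps.
  destruct (dpl_bound _ t _ (eps / 2) H1 ltac:(lra)) as [d1 [Hd1 G1]].
  destruct (dpl_bound _ t _ (eps / 2) H2 ltac:(lra)) as [d2 [Hd2 G2]].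
  exists (Rmin d1 d2). split; [apply Rmin_pos; auto|]. intros h Hh.
  specialize (G1 h (Rlt_le_trans _ _ _ Hh (Rmin_l _ _))).
  specialize (G2 h (Rlt_le_trans _ _ _ Hh (Rmin_r _ _))).
  eapply Rle_trans. apply Cmod_le_sum. simpl.
  replace (fst (phi (t + h)%R) + - fst (phi t) - (fst l * h - snd l * 0)) with
    (fst (phi (t + h)%R) - fst (phi t) - fst l * h) by ring.
  replace (snd (phi (t + h)%R) + - snd (phi t) - (fst l * 0 + snd l * h)) with
    (snd (phi (t + h)%R) - snd (phi t) - snd l * h) by ring.
  lra.
Qed.

Lemma comp_of_PD (phi : R -> C) t (l : C) (pr : C -> R) :
  (forall z, Rabs (pr z) <= Cmod z) -> (forall u v, pr (u - v)%C = pr u - pr v) ->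
  (forall (h : R), pr (l * RtoC h)%C = pr l * h) ->
  PD phi t l -> derivable_pt_lim (fun s => pr (phi s)) t (pr l).
Proof.
  intros Hc Hl Hm H eps Heps.
  destruct (H (eps / 2) ltac:(lra)) as [d [Hd G]].
  exists (mkposreal d Hd). intros h Hn Hh. simpl in Hh. specialize (G h Hh).
  assert (Hh0 : 0 < Rabs h) by (apply Rabs_pos_lt; auto).
  replace ((pr (phi (t + h)%R) - pr (phi t)) / h - pr l) with
    (pr (phi (t + h)%R - phi t - l * RtoC h)%C / h) by (rewrite !Hl, Hm; field; auto).
  unfold Rdiv. rewrite Rabs_mult, Rabs_inv.
  apply Rle_lt_trans with (eps / 2 * Rabs h * / Rabs h).
  - apply Rmult_le_compat_r. apply Rlt_le, Rinv_0_lt_compat; auto.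
    eapply Rle_trans; [apply Hc|exact G].
  - replace (eps / 2 * Rabs h * / Rabs h) with (eps / 2) by (field; lra). lra.
Qed.

Lemma fst_mulR (l : C) (h : R) : fst (l * RtoC h)%C = fst l * h. Proof. simpl. ring. Qed.
Lemma snd_mulR (l : C) (h : R) : snd (l * RtoC h)%C = snd l * h. Proof. simpl. ring. Qed.

Lemma PD_fst (phi : R -> C) t l : PD phi t l -> derivable_pt_lim (fun s => fst (phi s)) t (fst l).
Proof. intros H. apply (comp_of_PD phi t l (fun z : C => fst z)); [intros z; apply Rabs_fst_le|intros u v; apply fst_sub|intros h; apply fst_mulR|exact H]. Qed.
Lemma PD_snd (phi : R -> C) t l : PD phi t l -> derivable_pt_lim (fun s => snd (phi s)) t (snd l).
Proof. intros H. apply (comp_of_PD phi t l (fun z : C => snd z)); [intros z; apply Rabs_snd_le|intros u v; apply snd_sub|intros h; apply snd_mulR|exact H]. Qed.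

Lemma PD_cont (phi : R -> C) t l : PD phi t l -> Pcont phi t.
Proof.
  intros H eps Heps. destruct (H 1 Rlt_0_1) as [d [Hd Hh]].
  set (M := Cmod l + 1). assert (HM : 0 < M) by (unfold M; pose proof (Cmod_ge_0 l); lra).
  exists (Rmin d (eps / M)). split; [apply Rmin_pos; auto; apply Rdiv_lt_0_compat; auto|].
  intros s Hs. set (h := s - t). replace s with (t + h) by (unfold h; ring).
  assert (H1 := Hh h (Rlt_le_trans _ _ _ Hs (Rmin_l _ _))).
  replace (phi (t + h)%R - phi t)%C with ((phi (t + h)%R - phi t - l * RtoC h) + l * RtoC h)%C by ring.
  eapply Rle_lt_trans. apply Cmod_triangle. rewrite Cmod_mult, Cmod_R.
  assert (Hh2 : Rabs h < eps / M) by (eapply Rlt_le_trans; [apply Hs| apply Rmin_r]).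
  assert (Rabs h * M < eps).
  { apply (Rmult_lt_compat_r M) in Hh2; auto. unfold Rdiv in Hh2. rewrite Rmult_assoc, Rinv_l in Hh2; lra. }
  unfold M in H0. pose proof (Rabs_pos h). nra.
Qed.

Lemma PD_chain (F : C -> C) (phi : R -> C) t (L l : C) :
  CD F (phi t) L -> PD phi t l -> PD (fun s => F (phi s)) t (L * l)%C.
Proof.
  intros HF Hp eps Heps.
  set (Ml := Cmod l + 1). set (ML := Cmod L + 1).
  assert (HMl : 0 < Ml) by (unfold Ml; pose proof (Cmod_ge_0 l); lra).
  assert (HML : 0 < ML) by (unfold ML; pose proof (Cmod_ge_0 L); lra).
  destruct (HF (eps / (2 * Ml))) as [d1 [Hd1 G1]]; [apply Rdiv_lt_0_compat; lra|].
  destruct (Hp (Rmin 1 (eps / (2 * ML)))) as [d2 [Hd2 G2]].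
  { apply Rmin_pos; [lra|apply Rdiv_lt_0_compat; lra]. }
  exists (Rmin d2 (d1 / Ml)). split; [apply Rmin_pos; auto; apply Rdiv_lt_0_compat; auto|].
  intros h Hh.
  assert (Hh2 : Rabs h < d2) by (eapply Rlt_le_trans; [apply Hh|apply Rmin_l]).
  assert (Hh1 : Rabs h < d1 / Ml) by (eapply Rlt_le_trans; [apply Hh|apply Rmin_r]).
  specialize (G2 h Hh2).
  set (H := (phi (t + h)%R - phi t)%C).
  assert (HB : Cmod H <= Ml * Rabs h).
  { unfold H. replace (phi (t + h)%R - phi t)%C with ((phi (t + h)%R - phi t - l * RtoC h) + l * RtoC h)%C by ring.
    eapply Rle_trans. apply Cmod_triangle. rewrite Cmod_mult, Cmod_R.
    assert (Rmin 1 (eps / (2 * ML)) <= 1) by apply Rmin_l. pose proof (Rabs_pos h).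
    unfold Ml. nra. }
  assert (HH : Cmod H < d1).
  { eapply Rle_lt_trans. apply HB. apply (Rmult_lt_compat_l Ml) in Hh1; auto.
    unfold Rdiv in Hh1. rewrite <- Rmult_assoc, (Rmult_comm Ml d1), Rmult_assoc, Rinv_r in Hh1; lra. }
  specialize (G1 H HH).
  replace (phi t + H)%C with (phi (t + h)%R) in G1 by (unfold H; ring).
  replace (F (phi (t + h)%R) - F (phi t) - L * l * RtoC h)%C with
    ((F (phi (t + h)%R) - F (phi t) - L * H) + L * (phi (t + h)%R - phi t - l * RtoC h))%C by (unfold H; ring).
  eapply Rle_trans. apply Cmod_triangle. rewrite Cmod_mult.
  pose proof (Rabs_pos h). pose proof (Cmod_ge_0 L).
  assert (T1 : Cmod (F (phi (t + h)%R) - F (phi t) - L * H)%C <= eps / 2 * Rabs h).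
  { eapply Rle_trans. apply G1. apply Rle_trans with (eps / (2 * Ml) * (Ml * Rabs h)).
    apply Rmult_le_compat_l; auto. apply Rlt_le, Rdiv_lt_0_compat; lra.
    right. field. lra. }
  assert (T2 : Cmod L * Cmod (phi (t + h)%R - phi t - l * RtoC h)%C <= eps / 2 * Rabs h).
  { apply Rle_trans with (Cmod L * (eps / (2 * ML) * Rabs h)).
    - apply Rmult_le_compat_l; auto. eapply Rle_trans. apply G2.
      apply Rmult_le_compat_r; auto. apply Rmin_r.
    - assert (Cmod L * (eps / (2 * ML)) <= eps / 2).
      { apply Rle_trans with (ML * (eps / (2 * ML))).
        apply Rmult_le_compat_r. apply Rlt_le, Rdiv_lt_0_compat; lra. unfold ML; lra.
        right. field. lra. }
      nra. }
  lra.
Qed.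

Lemma PD_mult (f g : R -> C) t (lf lg : C) : PD f t lf -> PD g t lg ->
  PD (fun s => f s * g s)%C t (lf * g t + f t * lg)%C.
Proof.
  intros Hf Hg eps Heps.
  set (Gz := Cmod (g t)). set (Fz := Cmod (f t)). set (Lf := Cmod lf).
  assert (HGz : 0 <= Gz) by apply Cmod_ge_0.
  assert (HFz : 0 <= Fz) by apply Cmod_ge_0.
  assert (HLf : 0 <= Lf) by apply Cmod_ge_0.
  destruct (Hf (eps / (3 * (Gz + 1)))) as [d1 [Hd1 H1]].
  { apply Rdiv_lt_0_compat; lra. }
  destruct (Hg (eps / (3 * (Fz + 1)))) as [d2 [Hd2 H2]].
  { apply Rdiv_lt_0_compat; lra. }
  destruct (PD_cont g t lg Hg (Rmin 1 (eps / (3 * (Lf + 1))))) as [d3 [Hd3 H3]].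
  { apply Rmin_pos; [lra|]. apply Rdiv_lt_0_compat; lra. }
  exists (Rmin d1 (Rmin d2 d3)). split.
  { repeat apply Rmin_pos; auto. }
  intros h Hh.
  assert (Hh1 : Rabs h < d1) by (eapply Rlt_le_trans; [apply Hh|apply Rmin_l]).
  assert (Hh2 : Rabs h < d2) by (eapply Rlt_le_trans; [apply Hh|]; eapply Rle_trans; [apply Rmin_r|apply Rmin_l]).
  assert (Hh3 : Rabs h < d3) by (eapply Rlt_le_trans; [apply Hh|]; eapply Rle_trans; [apply Rmin_r|apply Rmin_r]).
  specialize (H1 h Hh1). specialize (H2 h Hh2).
  assert (H3' := H3 (t + h)). replace (t + h - t) with h in H3' by ring.
  specialize (H3' Hh3).
  set (A := (f (t + h)%R - f t - lf * RtoC h)%C) in *.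
  set (B := (g (t + h)%R - g t - lg * RtoC h)%C) in *.
  set (D := (g (t + h)%R - g t)%C) in *.
  replace (f (t + h)%R * g (t + h)%R - f t * g t - (lf * g t + f t * lg) * RtoC h)%C with
    (A * g (t + h)%R + f t * B + lf * RtoC h * D)%C by (unfold A, B, D; ring).
  eapply Rle_trans. apply Cmod_tri3. rewrite !Cmod_mult, Cmod_R. fold Fz Lf.
  assert (HD1 : Cmod D < 1) by (eapply Rlt_le_trans; [apply H3'|apply Rmin_l]).
  assert (HD2 : Cmod D < eps / (3 * (Lf + 1))) by (eapply Rlt_le_trans; [apply H3'|apply Rmin_r]).
  assert (Hgzh : Cmod (g (t + h)%R) <= Gz + 1).
  { replace (g (t + h)%R) with (g t + D)%C by (unfold D; ring).
    eapply Rle_trans. apply Cmod_triangle. fold Gz. lra. }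
  pose proof (Rabs_pos h) as Hh0. pose proof (Cmod_ge_0 A) as HA0.
  pose proof (Cmod_ge_0 B) as HB0. pose proof (Cmod_ge_0 D) as HD0.
  pose proof (Cmod_ge_0 (g (t + h)%R)) as Hg0.
  assert (T1 : Cmod A * Cmod (g (t + h)%R) <= eps / 3 * Rabs h).
  { apply Rle_trans with (eps / (3 * (Gz + 1)) * Rabs h * (Gz + 1)).
    - apply Rmult_le_compat; auto.
    - replace (eps / (3 * (Gz + 1)) * Rabs h * (Gz + 1)) with (eps / 3 * Rabs h) by (field; lra). lra. }
  assert (T2 : Fz * Cmod B <= eps / 3 * Rabs h).
  { apply Rle_trans with (Fz * (eps / (3 * (Fz + 1)) * Rabs h)).
    - apply Rmult_le_compat_l; auto.
    - assert (Fz * (eps / (3 * (Fz + 1))) <= eps / 3).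
      { apply Rle_trans with ((Fz + 1) * (eps / (3 * (Fz + 1)))).
        + apply Rmult_le_compat_r; [apply Rlt_le, Rdiv_lt_0_compat; lra| lra].
        + right. field. lra. }
      nra. }
  assert (T3 : Lf * Rabs h * Cmod D <= eps / 3 * Rabs h).
  { assert (Lf * Cmod D <= eps / 3).
    { apply Rle_trans with ((Lf + 1) * (eps / (3 * (Lf + 1)))).
      + apply Rmult_le_compat; lra.
      + right. field. lra. }
    nra. }
  lra.
Qed.

Lemma PD_cexp (psi : R -> C) t (l : C) : PD psi t l ->
  PD (fun s => Cexp (psi s)) t (Cexp (psi t) * l)%C.
Proof.
  intros H.
  assert (H1 := PD_fst _ _ _ H). assert (H2 := PD_snd _ _ _ H).
  apply is_derive_Reals in H1. apply is_derive_Reals in H2.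
  set (p1 := fun s => fst (psi s)) in *. set (p2 := fun s => snd (psi s)) in *.
  assert (E1 : is_derive (fun s => exp (p1 s)) t (fst l * exp (p1 t))).
  { apply (is_derive_comp exp p1 t). apply is_derive_exp. exact H1. }
  assert (E2 : is_derive (fun s => cos (p2 s)) t (snd l * - sin (p2 t))).
  { apply (is_derive_comp cos p2 t). apply is_derive_cos. exact H2. }
  assert (E3 : is_derive (fun s => sin (p2 s)) t (snd l * cos (p2 t))).
  { apply (is_derive_comp sin p2 t). apply is_derive_sin. exact H2. }
  assert (M1 := is_derive_mult _ _ t _ _ E1 E2 ltac:(intros; apply Rmult_comm)).
  assert (M2 := is_derive_mult _ _ t _ _ E1 E3 ltac:(intros; apply Rmult_comm)).
  apply PD_of_comp.
  - apply is_derive_Reals. unfold Cexp. simpl.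
    replace (exp (fst (psi t)) * cos (snd (psi t)) * fst l - exp (fst (psi t)) * sin (snd (psi t)) * snd l)
      with (plus (mult (fst l * exp (p1 t)) (cos (p2 t))) (mult (exp (p1 t)) (snd l * - sin (p2 t))))
      by (unfold p1, p2; simpl; unfold plus, mult; simpl; ring).
    exact M1.
  - apply is_derive_Reals. unfold Cexp. simpl.
    replace (exp (fst (psi t)) * cos (snd (psi t)) * snd l + exp (fst (psi t)) * sin (snd (psi t)) * fst l)
      with (plus (mult (fst l * exp (p1 t)) (sin (p2 t))) (mult (exp (p1 t)) (snd l * cos (p2 t))))
      by (unfold p1, p2; simpl; unfold plus, mult; simpl; ring).
    exact M2.
Qed.

Lemma PD_plus (f g : R -> C) t (lf lg : C) : PD f t lf -> PD g t lg ->
  PD (fun s => f s + g s)%C t (lf + lg)%C.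
Proof.
  intros Hf Hg eps Heps.
  destruct (Hf (eps/2)) as [d1 [Hd1 H1]]; [lra|].
  destruct (Hg (eps/2)) as [d2 [Hd2 H2]]; [lra|].
  exists (Rmin d1 d2). split; [apply Rmin_pos; auto|]. intros h Hh.
  specialize (H1 h (Rlt_le_trans _ _ _ Hh (Rmin_l _ _))).
  specialize (H2 h (Rlt_le_trans _ _ _ Hh (Rmin_r _ _))).
  replace (f (t + h)%R + g (t + h)%R - (f t + g t) - (lf + lg) * RtoC h)%C with
    ((f (t + h)%R - f t - lf * RtoC h) + (g (t + h)%R - g t - lg * RtoC h))%C by ring.
  eapply Rle_trans. apply Cmod_triangle. lra.
Qed.

Lemma PD_ext (f g : R -> C) t l : (forall s, f s = g s) -> PD f t l -> PD g t l.
Proof. intros E H. replace g with f; auto. apply functional_extensionality; auto. Qed.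

Lemma Pcont_to_C (phi : R -> C) t : Pcont phi t -> Ccont (fun z => phi (fst z)) (t, 0).
Proof.
  intros H eps Heps. destruct (H eps Heps) as [d [Hd Hs]]. exists d. split; auto.
  intros w Hw. apply Hs. eapply Rle_lt_trans; [|apply Hw]. apply (Rabs_fst_le (w - (t, 0))%C).
Qed.

Lemma C_to_Pcont (phi : R -> C) t : Ccont (fun z => phi (fst z)) (t, 0) -> Pcont phi t.
Proof.
  intros H eps Heps. destruct (H eps Heps) as [d [Hd Hs]]. exists d. split; auto.
  intros s Hs'. apply (Hs (s, 0)). rewrite Cmod_pair_h. auto.
Qed.

Lemma Pcont_mult (f g : R -> C) t : Pcont f t -> Pcont g t -> Pcont (fun s => f s * g s)%C t.
Proof.
  intros Hf Hg. apply C_to_Pcont.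
  apply (Ccont_mult (fun z => f (fst z)) (fun z => g (fst z))); apply Pcont_to_C; auto.
Qed.

Lemma Pcont_plus (f g : R -> C) t : Pcont f t -> Pcont g t -> Pcont (fun s => f s + g s)%C t.
Proof.
  intros Hf Hg. apply C_to_Pcont.
  apply (Ccont_plus (fun z => f (fst z)) (fun z => g (fst z))); apply Pcont_to_C; auto.
Qed.

Lemma Pcont_comp (F : C -> C) (phi : R -> C) t : Pcont phi t -> Ccont F (phi t) ->
  Pcont (fun s => F (phi s)) t.
Proof.
  intros Hp HF eps Heps. destruct (HF eps Heps) as [d1 [Hd1 H1]].
  destruct (Hp d1 Hd1) as [d2 [Hd2 H2]]. exists d2. split; auto.
Qed.

Lemma Pcont_ext (f g : R -> C) t : (forall s, f s = g s) -> Pcont f t -> Pcont g t.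
Proof. intros E H. replace g with f; auto. apply functional_extensionality; auto. Qed.

Lemma Pcont_const (c : C) t : Pcont (fun _ => c) t.
Proof. apply C_to_Pcont. apply (Ccont_const c). Qed.

Lemma Pcont_fst (phi : R -> C) t : Pcont phi t -> continuous (fun s => fst (phi s)) t.
Proof.
  intros H. apply cont_of_pt. intros eps Heps. destruct (H eps Heps) as [d [Hd Hs]].
  exists d. split; auto. intros x Hx. eapply Rle_lt_trans; [|apply (Hs x Hx)]. apply (Rabs_fst_le (phi x - phi t)%C).
Qed.
Lemma Pcont_snd (phi : R -> C) t : Pcont phi t -> continuous (fun s => snd (phi s)) t.
Proof.
  intros H. apply cont_of_pt. intros eps Heps. destruct (H eps Heps) as [d [Hd Hs]].
  exists d. split; auto. intros x Hx. eapply Rle_lt_trans; [|apply (Hs x Hx)]. apply (Rabs_snd_le (phi x - phi t)%C).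
Qed.

Lemma Pcont_of_comps (phi : R -> C) t : continuity_pt (fun s => fst (phi s)) t ->
  continuity_pt (fun s => snd (phi s)) t -> Pcont phi t.
Proof.
  intros H1 H2 eps Heps.
  destruct (H1 (eps / 2) ltac:(lra)) as [d1 [Hd1 G1]].
  destruct (H2 (eps / 2) ltac:(lra)) as [d2 [Hd2 G2]].
  exists (Rmin d1 d2). split; [apply Rmin_pos; lra|]. intros s Hs.
  assert (Hs1 : Rabs (s - t) < d1) by (eapply Rlt_le_trans; [apply Hs|apply Rmin_l]).
  assert (Hs2 : Rabs (s - t) < d2) by (eapply Rlt_le_trans; [apply Hs|apply Rmin_r]).
  destruct (Req_dec s t) as [->|Hn].
  - replace (phi t - phi t)%C with (RtoC 0) by ring. rewrite Cmod_R, Rabs_R0. lra.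
  - specialize (G1 s (conj (conj I (not_eq_sym Hn)) Hs1)). specialize (G2 s (conj (conj I (not_eq_sym Hn)) Hs2)).
    simpl in G1, G2. unfold R_dist in G1, G2.
    eapply Rle_lt_trans. apply Cmod_le_sum. lra.
Qed.

Lemma cont_sqrt_comp (f : R -> R) t : continuous f t -> 0 <= f t -> continuous (fun s => sqrt (f s)) t.
Proof.
  intros H Hp. apply (continuous_comp f sqrt). auto.
  apply continuity_pt_filterlim. apply continuity_pt_sqrt. auto.
Qed.

Lemma cont_Cnorm2 (phi : R -> C) t : Pcont phi t -> continuous (fun s => Cnorm2 (phi s)) t.
Proof.
  intros H. unfold Cnorm2.
  apply (continuous_plus (V := R_NormedModule) (fun s => fst (phi s) * fst (phi s)) (fun s => snd (phi s) * snd (phi s))).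
  - apply (continuous_mult (fun s => fst (phi s)) (fun s => fst (phi s))); apply Pcont_fst; auto.
  - apply (continuous_mult (fun s => snd (phi s)) (fun s => snd (phi s))); apply Pcont_snd; auto.
Qed.

Lemma Cnorm2_ge0 (z : C) : 0 <= Cnorm2 z.
Proof. unfold Cnorm2. pose proof (Rle_0_sqr (fst z)). pose proof (Rle_0_sqr (snd z)). unfold Rsqr in *. lra. Qed.

Lemma cont_DCmod (phi : R -> C) t : Pcont phi t -> continuous (fun s => Defs.Cmod (phi s)) t.
Proof.
  intros H. unfold Defs.Cmod. apply (cont_sqrt_comp (fun s => Cnorm2 (phi s))). apply cont_Cnorm2; auto.
  apply Cnorm2_ge0.
Qed.

Lemma holo_CD (f f' : C -> C) : holo_on_disk f f' -> forall z, in_disk z -> CD f z (f' z).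
Proof. intros H z Hz. apply has_CD. apply H. auto. Qed.

Lemma in_disk_eq (z : C) : in_disk z <-> Cmod z < 1.
Proof. unfold in_disk. rewrite Cmod_eq. tauto. Qed.

Lemma holo_cont (f f' : C -> C) (B : R) : holo_on_disk f f' ->
  (forall z, in_disk z -> Cmod (f z) <= B) -> forall z0, in_disk z0 -> Ccont f' z0.
Proof.
  intros Hh HB z0 Hz0. apply in_disk_eq in Hz0.
  destruct z0 as [u0 v0].
  set (rho := (1 - Cmod (u0, v0)) / 4).
  assert (Hrho : 0 < rho) by (unfold rho; lra).
  assert (Hin : forall w : C, u0 - rho <= fst w <= u0 + rho -> v0 - rho <= snd w <= v0 + rho -> in_disk w).
  { intros w H1 H2. apply in_disk_eq.
    replace w with ((u0, v0) + (w - (u0, v0)))%C by ring.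
    eapply Rle_lt_trans. apply Cmod_triangle.
    assert (Cmod (w - (u0, v0))%C <= 2 * rho).
    { eapply Rle_trans. apply Cmod_le_sum. simpl. unfold Rabs; repeat destruct Rcase_abs; lra. }
    unfold rho in *. lra. }
  apply (fprime_cont u0 v0 rho Hrho f f' B).
  - intros w H1 H2. apply holo_CD; auto.
  - intros w [H1 [H2 _]]. apply HB; auto.
Qed.

Lemma Cmod_Cexp (q : C) : Cmod (Cexp q) = exp (fst q).
Proof.
  unfold Cexp, Cmod. simpl.
  replace (exp (fst q) * cos (snd q) * (exp (fst q) * cos (snd q) * 1) +
           exp (fst q) * sin (snd q) * (exp (fst q) * sin (snd q) * 1))
    with (exp (fst q) * exp (fst q) * (Rsqr (sin (snd q)) + Rsqr (cos (snd q)))) by (unfold Rsqr; ring).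
  rewrite sin2_cos2, Rmult_1_r. apply sqrt_square. apply Rlt_le, exp_pos.
Qed.

Lemma DCmod_Cnorm2 (z : C) : Defs.Cmod z = sqrt (Cnorm2 z).
Proof. reflexivity. Qed.

Lemma Cnorm2_Cmod (z : C) : Cnorm2 z = Cmod z * Cmod z.
Proof. rewrite <- Cmod_eq. unfold Defs.Cmod. rewrite sqrt_sqrt; auto. apply Cnorm2_ge0. Qed.

Lemma dsL_ge_omega W X' Y Y' (z : C) : Cmod (omega_coef W X' z) <= dsL_density W X' Y Y' z.
Proof.
  unfold dsL_density. rewrite <- Cmod_eq. unfold Defs.Cmod. apply sqrt_le_1_alt.
  pose proof (Cnorm2_ge0 (theta_coef W X' Y Y' z)). lra.
Qed.
Lemma dsL_ge_theta W X' Y Y' (z : C) : Cmod (theta_coef W X' Y Y' z) <= dsL_density W X' Y Y' z.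
Proof.
  unfold dsL_density. rewrite <- Cmod_eq. unfold Defs.Cmod. apply sqrt_le_1_alt.
  pose proof (Cnorm2_ge0 (omega_coef W X' z)). lra.
Qed.

Lemma omega_mod W X' (z : C) : Cmod (omega_coef W X' z) = exp (-2 * fst (W z)) * Cmod (X' z).
Proof.
  unfold omega_coef. rewrite Cmul_eq, Cmod_mult, Cmod_Cexp. f_equal. f_equal. unfold two. simpl. ring.
Qed.
Lemma theta_mod W X' Y Y' (z : C) : Cmod (theta_coef W X' Y Y' z) =
  exp (2 * fst (W z)) * Cmod (Y' z - Y z * Y z * X' z)%C.
Proof.
  unfold theta_coef. rewrite Cmul_eq, Cmod_mult, Cmod_Cexp. f_equal. f_equal. unfold two. simpl. ring.
Qed.

Lemma induced_bound X' Y' Z' (z : C) :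
  (Cmul (X' z) (X' z) + Cmul (Y' z) (Y' z) + Cmul (Z' z) (Z' z))%C = 0%C ->
  induced_density X' Y' Z' z <= 2 * (Cmod (X' z) + Cmod (Y' z)).
Proof.
  intros Hn. unfold induced_density.
  set (x := X' z) in *. set (y := Y' z) in *. set (w := Z' z) in *.
  assert (Hw : Cnorm2 w <= Cnorm2 x + Cnorm2 y).
  { rewrite !Cnorm2_Cmod. rewrite <- Cmod_mult.
    replace (w * w)%C with (- (x * x + y * y))%C.
    - rewrite Cmod_opp. eapply Rle_trans. apply Cmod_triangle. rewrite !Cmod_mult. lra.
    - assert (Hn' : (x * x + y * y + w * w)%C = 0%C) by exact Hn.
      replace (w * w)%C with ((x * x + y * y + w * w) - (x * x + y * y))%C by ring.
      rewrite Hn'. ring. }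
  pose proof (Cmod_ge_0 x). pose proof (Cmod_ge_0 y).
  rewrite !Cnorm2_Cmod in *.
  rewrite <- (sqrt_square (2 * (Cmod x + Cmod y))) by lra.
  apply sqrt_le_1_alt. nra.
Qed.

Section Main.
Variables (X Y X' Y' W W' : C -> C).
Hypothesis hX : holo_on_disk X X'.
Hypothesis hY : holo_on_disk Y Y'.
Hypothesis hW : holo_on_disk W W'.
Hypothesis hW' : forall z, in_disk z -> W' z = Defs.Copp (Cmul (Y z) (X' z)).
Hypothesis hXb : forall z, in_disk z -> 1 < Defs.Cmod (X z) < 2.
Hypothesis hYb : forall z, in_disk z -> Defs.Cmod (Y z) < 1/3.

Lemma cXp z : in_disk z -> Ccont X' z.
Proof. apply (holo_cont X X' 2 hX). intros w Hw. rewrite <- Cmod_eq. specialize (hXb w Hw). lra. Qed.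
Lemma cYp z : in_disk z -> Ccont Y' z.
Proof. apply (holo_cont Y Y' (1/3) hY). intros w Hw. rewrite <- Cmod_eq. specialize (hYb w Hw). lra. Qed.
Lemma cXc z : in_disk z -> Ccont X z.
Proof. intros Hz. eapply CD_cont. apply holo_CD; eauto. Qed.
Lemma cYc z : in_disk z -> Ccont Y z.
Proof. intros Hz. eapply CD_cont. apply holo_CD; eauto. Qed.
Lemma cWc z : in_disk z -> Ccont W z.
Proof. intros Hz. eapply CD_cont. apply holo_CD; eauto. Qed.

Lemma disk_open z : in_disk z -> forall w, Cmod (w - z)%C < 1 - Cmod z -> in_disk w.
Proof.
  intros Hz w Hw. apply in_disk_eq. replace w with (z + (w - z))%C by ring.
  eapply Rle_lt_trans. apply Cmod_triangle. lra.
Qed.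

Lemma cWp z : in_disk z -> Ccont W' z.
Proof.
  intros Hz. assert (Hz' := proj1 (in_disk_eq z) Hz).
  apply (Ccont_local (fun w => (-1) * (Y w * X' w))%C W' z (1 - Cmod z)); [lra| |].
  - intros w Hw. rewrite hW' by (eapply disk_open; eauto). unfold Defs.Copp, Cmul. simpl.
    apply injective_projections; simpl; ring.
  - apply (Ccont_mult (fun _ => (-1)%C)). apply Ccont_const.
    apply (Ccont_mult Y X'). apply cYc; auto. apply cXp; auto.
Qed.

Section Path.
Variables (gamma gamma' : R -> C).
Hypothesis Hd : divergent_path gamma gamma'.

Lemma gin t : 0 <= t < 1 -> in_disk (gamma t).
Proof. destruct Hd as [H _]. auto. Qed.

Lemma gPD t : 0 <= t < 1 -> PD gamma t (gamma' t).
Proof.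
  intros Ht. destruct Hd as [_ [H _]]. destruct (H t Ht) as [H1 [H2 _]].
  apply PD_of_comp; auto.
Qed.

Lemma gPc' t : 0 <= t < 1 -> Pcont gamma' t.
Proof.
  intros Ht. destruct Hd as [_ [H _]]. destruct (H t Ht) as [_ [_ [H3 H4]]].
  apply Pcont_of_comps; auto.
Qed.

Lemma gPc t : 0 <= t < 1 -> Pcont gamma t.
Proof. intros Ht. eapply PD_cont. apply gPD; auto. Qed.

Lemma PDF (F F' : C -> C) t : holo_on_disk F F' -> 0 <= t < 1 ->
  PD (fun s => F (gamma s)) t (F' (gamma t) * gamma' t)%C.
Proof. intros HF Ht. apply PD_chain. apply holo_CD; auto. apply gin; auto. apply gPD; auto. Qed.

Lemma PcF (F : C -> C) t : (forall z, in_disk z -> Ccont F z) -> 0 <= t < 1 -> Pcont (fun s => F (gamma s)) t.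
Proof. intros HF Ht. apply Pcont_comp. apply gPc; auto. apply HF. apply gin; auto. Qed.

Lemma PD_cW (c : C) t : 0 <= t < 1 ->
  PD (fun s => Cexp (c * W (gamma s))%C) t (Cexp (c * W (gamma t)) * (c * W' (gamma t) * gamma' t))%C.
Proof.
  intros Ht. apply (PD_cexp (fun s => c * W (gamma s))%C).
  apply PD_chain with (F := (fun z => (c * W z)%C)). apply CD_scal. apply holo_CD; auto. apply gin; auto.
  apply gPD; auto.
Qed.

Lemma Pc_cW (c : C) t : 0 <= t < 1 -> Pcont (fun s => Cexp (c * W (gamma s))%C) t.
Proof. intros Ht. eapply PD_cont. apply PD_cW; auto. Qed.

Lemma Pc_omega t : 0 <= t < 1 -> Pcont (fun s => omega_coef W X' (gamma s)) t.
Proof.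
  intros Ht. apply Pcont_ext with (fun s => Cexp ((- two) * W (gamma s))%C * X' (gamma s))%C.
  - intros s. unfold omega_coef.
    replace (Defs.Copp (Cmul two (W (gamma s)))) with ((- two) * W (gamma s))%C; [reflexivity|].
    unfold Defs.Copp, Cmul, two. apply injective_projections; simpl; ring.
  - apply Pcont_mult. apply Pc_cW; auto. apply PcF; auto. apply cXp.
Qed.

Lemma Pc_theta t : 0 <= t < 1 -> Pcont (fun s => theta_coef W X' Y Y' (gamma s)) t.
Proof.
  intros Ht. apply Pcont_ext with (fun s => Cexp (two * W (gamma s))%C *
        (Y' (gamma s) + (-1) * (Y (gamma s) * Y (gamma s) * X' (gamma s))))%C.
  - intros s. unfold theta_coef.
    replace (Csub (Y' (gamma s)) (Cmul (Cmul (Y (gamma s)) (Y (gamma s))) (X' (gamma s)))) with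
      (Y' (gamma s) + (-1) * (Y (gamma s) * Y (gamma s) * X' (gamma s)))%C; [reflexivity|].
    unfold Csub, Cadd, Defs.Copp, Cmul. apply injective_projections; simpl; ring.
  - apply Pcont_mult. apply Pc_cW; auto.
    apply Pcont_plus. apply PcF; auto. apply cYp.
    apply Pcont_mult. apply Pcont_const.
    apply Pcont_mult. apply Pcont_mult. apply PcF; auto; apply cYc. apply PcF; auto; apply cYc.
    apply PcF; auto; apply cXp.
Qed.

Definition gL (s : R) := dsL_density W X' Y Y' (gamma s) * Defs.Cmod (gamma' s).

Lemma gL_cont t : 0 <= t < 1 -> continuous gL t.
Proof.
  intros Ht. unfold gL.
  apply (continuous_mult (fun s => dsL_density W X' Y Y' (gamma s)) (fun s => Defs.Cmod (gamma' s))).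
  - unfold dsL_density. apply (cont_sqrt_comp (fun s => Cnorm2 (omega_coef W X' (gamma s)) + Cnorm2 (theta_coef W X' Y Y' (gamma s)))).
    + apply (continuous_plus (V := R_NormedModule) (fun s => Cnorm2 (omega_coef W X' (gamma s))) (fun s => Cnorm2 (theta_coef W X' Y Y' (gamma s)))).
      * apply cont_Cnorm2. apply Pc_omega; auto.
      * apply cont_Cnorm2. apply Pc_theta; auto.
    + pose proof (Cnorm2_ge0 (omega_coef W X' (gamma t))). pose proof (Cnorm2_ge0 (theta_coef W X' Y Y' (gamma t))). lra.
  - apply cont_DCmod. apply gPc'; auto.
Qed.

Lemma gL_ge0 s : 0 <= gL s.
Proof. unfold gL. apply Rmult_le_pos; apply sqrt_pos. Qed.

Lemma gL_ex s : 0 <= s < 1 -> ex_RInt gL 0 s.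
Proof.
  intros Hs. apply (ex_RInt_continuous (V := R_CompleteNormedModule)). intros z Hz.
  rewrite Rmin_left, Rmax_right in Hz by lra. apply gL_cont. lra.
Qed.


Lemma RInt_scalR (f : R -> R) (k a b : R) : ex_RInt f a b -> RInt (fun x => k * f x) a b = k * RInt f a b.
Proof.
  intros H. apply is_RInt_unique. apply (is_RInt_scal (V := R_NormedModule) f a b k).
  apply (RInt_correct (V := R_CompleteNormedModule)); auto.
Qed.

Definition uW (s : R) := fst (W (gamma s)).
Definition Ef (s : R) := exp (-2 * uW s).
Definition Efp (s : R) := exp (-2 * uW s) * (-2 * fst (W' (gamma s) * gamma' s)%C).

Lemma uW_der t : 0 <= t < 1 -> is_derive uW t (fst (W' (gamma t) * gamma' t)%C).
Proof. intros Ht. apply is_derive_Reals. unfold uW. apply (PD_fst (fun s => W (gamma s))). apply PDF; auto. Qed.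

Lemma uW_cont t : 0 <= t < 1 -> continuous uW t.
Proof. intros Ht. unfold uW. apply (Pcont_fst (fun s => W (gamma s))). apply PcF; auto. apply cWc. Qed.

Lemma Ef_der t : 0 <= t < 1 -> is_derive Ef t (Efp t).
Proof.
  intros Ht. unfold Ef, Efp.
  assert (H1 : is_derive (fun s => -2 * uW s) t (-2 * fst (W' (gamma t) * gamma' t)%C)).
  { apply (is_derive_scal uW t (-2)). apply uW_der; auto. }
  assert (H2 := is_derive_comp exp (fun s => -2 * uW s) t _ _ (is_derive_exp (-2 * uW t)) H1).
  replace (exp (-2 * uW t) * (-2 * fst (W' (gamma t) * gamma' t)%C)) with
    ((-2 * fst (W' (gamma t) * gamma' t)%C) * exp (-2 * uW t)) by ring.
  exact H2.
Qed.

Lemma cont_exp_comp (f : R -> R) t : continuous f t -> continuous (fun s => exp (f s)) t.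
Proof.
  intros H. apply (continuous_comp f exp). auto.
  apply continuity_pt_filterlim. apply derivable_continuous_pt, derivable_pt_exp.
Qed.

Lemma Efp_cont t : 0 <= t < 1 -> continuous Efp t.
Proof.
  intros Ht. unfold Efp.
  apply (continuous_mult (fun s => exp (-2 * uW s)) (fun s => -2 * fst (W' (gamma s) * gamma' s)%C)).
  - apply (cont_exp_comp (fun s => -2 * uW s)).
    apply (continuous_mult (fun _ => -2) uW). apply continuous_const. apply uW_cont; auto.
  - apply (continuous_mult (fun _ => -2) (fun s => fst (W' (gamma s) * gamma' s)%C)). apply continuous_const.
    apply (Pcont_fst (fun s => W' (gamma s) * gamma' s)%C).
    apply Pcont_mult. apply PcF; auto. apply cWp. apply gPc'; auto.
Qed.

Lemma gL_eq s : gL s = dsL_density W X' Y Y' (gamma s) * Cmod (gamma' s).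
Proof. unfold gL. rewrite Cmod_eq. reflexivity. Qed.

Lemma Efp_bound s : 0 <= s < 1 -> Efp s <= 2 / 3 * gL s.
Proof.
  intros Hs. assert (Hz := gin s Hs). set (z := gamma s) in *. set (v := gamma' s).
  unfold Efp. fold z v. rewrite gL_eq. fold z v.
  assert (Hf : fst (W' z * v)%C = - fst (Y z * X' z * v)%C).
  { rewrite hW' by auto. unfold Defs.Copp, Cmul. simpl. ring. }
  rewrite Hf.
  assert (H1 : fst (Y z * X' z * v)%C <= Cmod (Y z) * Cmod (X' z) * Cmod v).
  { eapply Rle_trans. apply Rle_abs. eapply Rle_trans. apply Rabs_fst_le. rewrite !Cmod_mult. lra. }
  assert (HY : Cmod (Y z) < 1 / 3) by (rewrite <- Cmod_eq; auto).
  assert (Hom := omega_mod W X' z). assert (Hge := dsL_ge_omega W X' Y Y' z).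
  unfold uW. fold z.
  set (e := exp (-2 * fst (W z))) in *. assert (He : 0 < e) by apply exp_pos.
  pose proof (Cmod_ge_0 (X' z)). pose proof (Cmod_ge_0 v). pose proof (Cmod_ge_0 (Y z)).
  apply Rle_trans with (2 / 3 * (e * Cmod (X' z)) * Cmod v).
  - apply Rle_trans with (e * (2 * (Cmod (Y z) * Cmod (X' z) * Cmod v))).
    + apply Rmult_le_compat_l; lra.
    + assert (Cmod (Y z) * Cmod (X' z) * Cmod v <= 1 / 3 * Cmod (X' z) * Cmod v).
      { apply Rmult_le_compat_r; auto. apply Rmult_le_compat_r; auto. lra. }
      nra.
  - rewrite <- Hom. rewrite Rmult_assoc. apply Rmult_le_compat_l. lra.
    apply Rmult_le_compat_r; auto.
Qed.

Lemma Ef_le t : 0 <= t < 1 -> Ef t <= Ef 0 + 2 / 3 * RInt gL 0 t.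
Proof.
  intros Ht.
  assert (HI : is_RInt Efp 0 t (minus (Ef t) (Ef 0))).
  { apply (is_RInt_derive (V := R_CompleteNormedModule) Ef Efp).
    - intros x Hx. rewrite Rmin_left, Rmax_right in Hx by lra. apply Ef_der; lra.
    - intros x Hx. rewrite Rmin_left, Rmax_right in Hx by lra. apply Efp_cont; lra. }
  assert (HE : RInt Efp 0 t = Ef t - Ef 0) by (apply is_RInt_unique; exact HI).
  assert (Hle : RInt Efp 0 t <= RInt (fun x => 2 / 3 * gL x) 0 t).
  { apply RInt_le; try lra.
    - exists (minus (Ef t) (Ef 0)). exact HI.
    - apply (ex_RInt_scal (V := R_NormedModule) gL 0 t (2/3)). apply gL_ex; auto.
    - intros x Hx. apply Efp_bound; lra. }
  rewrite RInt_scalR in Hle by (apply gL_ex; auto). lra.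
Qed.

Lemma PD_val (f : R -> C) t l1 l2 : l1 = l2 -> PD f t l1 -> PD f t l2.
Proof. intros ->. auto. Qed.

Lemma hW'C z : in_disk z -> W' z = (- (Y z * X' z))%C.
Proof. intros Hz. rewrite hW' by auto. reflexivity. Qed.

Definition Ap (s : R) := (1 + X (gamma s) * Y (gamma s))%C.
Definition Ew (s : R) := Cexp (1 * W (gamma s))%C.
Definition dd (s : R) := (Ap s * Ew s)%C.
Definition ddp (s : R) := (X (gamma s) * (Y' (gamma s) - Y (gamma s) * Y (gamma s) * X' (gamma s)) * gamma' s * Ew s)%C.

Lemma Ap_PD t : 0 <= t < 1 -> PD Ap t ((0 + (X' (gamma t) * Y (gamma t) + X (gamma t) * Y' (gamma t))) * gamma' t)%C.
Proof.
  intros Ht. unfold Ap. apply PD_chain with (F := (fun z => (1 + X z * Y z)%C)).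
  - apply (CD_plus (fun _ => 1%C) (fun z => X z * Y z)%C). apply CD_const.
    apply CD_mult; apply holo_CD; auto; apply gin; auto.
  - apply gPD; auto.
Qed.

Lemma dd_PD t : 0 <= t < 1 -> PD dd t (ddp t).
Proof.
  intros Ht. unfold dd.
  eapply PD_val; [|apply PD_mult; [apply Ap_PD; auto| apply (PD_cW 1%C t Ht)]].
  unfold ddp, Ap, Ew. rewrite hW'C by (apply gin; auto). ring.
Qed.

Lemma ddp_cont t : 0 <= t < 1 -> Pcont ddp t.
Proof.
  intros Ht. unfold ddp, Ew.
  apply Pcont_mult; [|apply Pc_cW; auto].
  apply Pcont_mult; [|apply gPc'; auto].
  apply Pcont_mult; [apply PcF; auto; apply cXc|].
  apply Pcont_ext with (fun s => Y' (gamma s) + (-1) * (Y (gamma s) * Y (gamma s) * X' (gamma s)))%C; [intros; ring|].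
  apply Pcont_plus. apply PcF; auto; apply cYp.
  apply Pcont_mult. apply Pcont_const.
  apply Pcont_mult. apply Pcont_mult. apply PcF; auto; apply cYc. apply PcF; auto; apply cYc.
  apply PcF; auto; apply cXp.
Qed.

Lemma ddp_bound s : 0 <= s < 1 -> Cmod (ddp s) <= 2 * (1 + Ef s) * gL s.
Proof.
  intros Hs. assert (Hz := gin s Hs).
  unfold ddp, Ef, uW, Ew. rewrite gL_eq.
  set (z := gamma s) in *. set (v := gamma' s).
  rewrite !Cmod_mult, Cmod_Cexp.
  replace (fst (1 * W z)%C) with (fst (W z)) by (simpl; ring).
  assert (Hth := theta_mod W X' Y Y' z). assert (Hge := dsL_ge_theta W X' Y Y' z).
  assert (HX : Cmod (X z) < 2) by (rewrite <- Cmod_eq; apply hXb; auto).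
  set (u := fst (W z)) in *.
  set (D := Cmod (Y' z - Y z * Y z * X' z)%C) in *.
  set (T := Cmod (theta_coef W X' Y Y' z)) in *.
  set (rL := dsL_density W X' Y Y' z) in *.
  assert (Ha : 0 < exp (- u)) by apply exp_pos.
  assert (He1 : 0 < exp u) by apply exp_pos.
  assert (Hae : exp (- u) * exp u = 1) by (rewrite <- exp_plus; replace (- u + u) with 0 by ring; apply exp_0).
  assert (H2u : exp (2 * u) = exp u * exp u) by (rewrite <- exp_plus; f_equal; ring).
  assert (Hm2u : exp (-2 * u) = exp (- u) * exp (- u)) by (rewrite <- exp_plus; f_equal; ring).
  rewrite Hm2u. rewrite H2u in Hth.
  assert (HD : D = exp (- u) * exp (- u) * T).
  { rewrite Hth. replace (exp (- u) * exp (- u) * (exp u * exp u * D)) with ((exp (- u) * exp u) * (exp (- u) * exp u) * D) by ring.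
    rewrite Hae. ring. }
  rewrite HD.
  pose proof (Cmod_ge_0 (X z)). pose proof (Cmod_ge_0 v). pose proof (Cmod_ge_0 (theta_coef W X' Y Y' z)).
  fold T.
  replace (Cmod (X z) * (exp (- u) * exp (- u) * T) * Cmod v * exp u) with
    (Cmod (X z) * exp (- u) * T * Cmod v * (exp (- u) * exp u)) by ring.
  rewrite Hae, Rmult_1_r.
  assert (Hs1 : exp (- u) <= 1 + exp (- u) * exp (- u)) by nra.
  assert (HT : 0 <= T) by (unfold T; apply Cmod_ge_0).
  apply Rle_trans with (2 * exp (- u) * rL * Cmod v).
  - apply Rmult_le_compat_r; auto.
    replace (Cmod (X z) * exp (- u) * T) with (exp (- u) * (Cmod (X z) * T)) by ring.
    replace (2 * exp (- u) * rL) with (exp (- u) * (2 * rL)) by ring.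
    apply Rmult_le_compat_l; [lra|]. apply Rmult_le_compat; lra.
  - assert (0 <= rL) by (unfold rL; apply sqrt_pos).
    replace (2 * (1 + exp (- u) * exp (- u)) * (rL * Cmod v)) with (2 * (1 + exp (- u) * exp (- u)) * rL * Cmod v) by ring.
    apply Rmult_le_compat_r; auto. apply Rmult_le_compat_r; auto. lra.
Qed.

Lemma FTC_bound (f f' : R -> R) (K t : R) : 0 <= t < 1 -> 0 <= K ->
  (forall x, 0 <= x <= t -> is_derive f x (f' x)) ->
  (forall x, 0 <= x <= t -> continuous f' x) ->
  (forall x, 0 <= x <= t -> Rabs (f' x) <= K * gL x) ->
  Rabs (f t - f 0) <= K * RInt gL 0 t.
Proof.
  intros Ht HK Hdf Hc Hb.
  assert (HI : is_RInt f' 0 t (minus (f t) (f 0))).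
  { apply (is_RInt_derive (V := R_CompleteNormedModule) f f').
    - intros x Hx. rewrite Rmin_left, Rmax_right in Hx by lra. apply Hdf; lra.
    - intros x Hx. rewrite Rmin_left, Rmax_right in Hx by lra. apply Hc; lra. }
  assert (HE : RInt f' 0 t = f t - f 0) by (apply is_RInt_unique; exact HI).
  assert (Hex : ex_RInt f' 0 t) by (exists (minus (f t) (f 0)); exact HI).
  assert (Hg := gL_ex t Ht).
  assert (H1 : RInt f' 0 t <= RInt (fun x => K * gL x) 0 t).
  { apply RInt_le; try lra; auto.
    - apply (ex_RInt_scal (V := R_NormedModule) gL 0 t K). auto.
    - intros x Hx. eapply Rle_trans; [apply Rle_abs|]. apply Hb; lra. }
  assert (H2 : RInt (fun x => (- K) * gL x) 0 t <= RInt f' 0 t).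
  { apply RInt_le; try lra; auto.
    - apply (ex_RInt_scal (V := R_NormedModule) gL 0 t (- K)). auto.
    - intros x Hx. assert (Hb' := Hb x ltac:(lra)).
      assert (- Rabs (f' x) <= f' x) by (pose proof (Rle_abs (- f' x)); rewrite Rabs_Ropp in H; lra).
      lra. }
  rewrite RInt_scalR in H1, H2 by auto. rewrite HE in H1, H2.
  unfold Rabs. destruct Rcase_abs; lra.
Qed.

Lemma M_nonneg M : (forall s, 0 <= s < 1 -> RInt gL 0 s <= M) -> 0 <= M.
Proof. intros HM. specialize (HM 0 ltac:(lra)). rewrite RInt_point in HM. exact HM. Qed.

Lemma Ef_C1 M : (forall s, 0 <= s < 1 -> RInt gL 0 s <= M) ->
  forall t, 0 <= t < 1 -> Ef t <= Ef 0 + 2 / 3 * M.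
Proof. intros HM t Ht. pose proof (Ef_le t Ht). pose proof (HM t Ht). lra. Qed.

Lemma dd_bound M : (forall s, 0 <= s < 1 -> RInt gL 0 s <= M) ->
  forall t, 0 <= t < 1 ->
  Rabs (fst (dd t) - fst (dd 0)) <= 2 * (1 + (Ef 0 + 2 / 3 * M)) * M /\
  Rabs (snd (dd t) - snd (dd 0)) <= 2 * (1 + (Ef 0 + 2 / 3 * M)) * M.
Proof.
  intros HM t Ht. assert (HM0 := M_nonneg M HM).
  set (K := 2 * (1 + (Ef 0 + 2 / 3 * M))).
  assert (HE0 : 0 < Ef 0) by apply exp_pos.
  assert (HK : 0 <= K) by (unfold K; lra).
  assert (Hpt : forall x, 0 <= x <= t -> Cmod (ddp x) <= K * gL x).
  { intros x Hx. eapply Rle_trans. apply ddp_bound; lra. apply Rmult_le_compat_r. apply gL_ge0.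
    unfold K. pose proof (Ef_C1 M HM x ltac:(lra)). lra. }
  assert (HgM : K * RInt gL 0 t <= K * M) by (apply Rmult_le_compat_l; auto).
  split.
  - eapply Rle_trans; [|exact HgM].
    apply (FTC_bound (fun s => fst (dd s)) (fun s => fst (ddp s))); auto.
    + intros x Hx. apply is_derive_Reals. apply PD_fst. apply dd_PD. lra.
    + intros x Hx. apply Pcont_fst. apply ddp_cont. lra.
    + intros x Hx. eapply Rle_trans. apply Rabs_fst_le. auto.
  - eapply Rle_trans; [|exact HgM].
    apply (FTC_bound (fun s => snd (dd s)) (fun s => snd (ddp s))); auto.
    + intros x Hx. apply is_derive_Reals. apply PD_snd. apply dd_PD. lra.
    + intros x Hx. apply Pcont_snd. apply ddp_cont. lra.
    + intros x Hx. eapply Rle_trans. apply Rabs_snd_le. auto.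
Qed.

Lemma expu_bound M : (forall s, 0 <= s < 1 -> RInt gL 0 s <= M) ->
  forall t, 0 <= t < 1 ->
  exp (uW t) <= 3 * (Rabs (fst (dd 0)) + Rabs (snd (dd 0)) + 2 * (2 * (1 + (Ef 0 + 2 / 3 * M)) * M)).
Proof.
  intros HM t Ht. destruct (dd_bound M HM t Ht) as [H1 H2].
  assert (Hz := gin t Ht).
  assert (Hmod : Cmod (dd t) = Cmod (Ap t) * exp (uW t)).
  { unfold dd, Ew, uW. rewrite Cmod_mult, Cmod_Cexp. f_equal. f_equal. simpl. ring. }
  assert (HA : 1 / 3 <= Cmod (Ap t)).
  { unfold Ap. assert (HX : Cmod (X (gamma t)) < 2) by (rewrite <- Cmod_eq; apply hXb; auto).
    assert (HY : Cmod (Y (gamma t)) < 1 / 3) by (rewrite <- Cmod_eq; apply hYb; auto).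
    pose proof (Cmod_triangle (1 + X (gamma t) * Y (gamma t)) (- (X (gamma t) * Y (gamma t))))%C.
    replace (1 + X (gamma t) * Y (gamma t) + - (X (gamma t) * Y (gamma t)))%C with (RtoC 1) in H by ring.
    rewrite Cmod_1, Cmod_opp, Cmod_mult in H.
    pose proof (Cmod_ge_0 (X (gamma t))). pose proof (Cmod_ge_0 (Y (gamma t))). nra. }
  assert (Hdd : Cmod (dd t) <= Rabs (fst (dd 0)) + Rabs (snd (dd 0)) + 2 * (2 * (1 + (Ef 0 + 2 / 3 * M)) * M)).
  { assert (Hc : forall z : C, Cmod z <= Rabs (fst z) + Rabs (snd z)) by (intros [p q]; apply Cmod_pair_le).
    eapply Rle_trans. apply Hc.
    set (p := fst (dd t)) in *. set (q := snd (dd t)) in *.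
    pose proof (Rabs_triang (p - fst (dd 0)) (fst (dd 0))). pose proof (Rabs_triang (q - snd (dd 0)) (snd (dd 0))).
    replace (p - fst (dd 0) + fst (dd 0)) with p in H by ring.
    replace (q - snd (dd 0) + snd (dd 0)) with q in H0 by ring. lra. }
  assert (He : 0 < exp (uW t)) by apply exp_pos.
  rewrite Hmod in Hdd. nra.
Qed.

Lemma gF_bound M (HM : forall s, 0 <= s < 1 -> RInt gL 0 s <= M) (Z' : C -> C)
  (hnull : forall z, in_disk z -> Cadd (Cadd (Cmul (X' z) (X' z)) (Cmul (Y' z) (Y' z))) (Cmul (Z' z) (Z' z)) = C0)
  s : 0 <= s < 1 ->
  induced_density X' Y' Z' (gamma s) * Defs.Cmod (gamma' s) <=
  2 * (2 * (3 * (Rabs (fst (dd 0)) + Rabs (snd (dd 0)) + 2 * (2 * (1 + (Ef 0 + 2 / 3 * M)) * M))) *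
          (3 * (Rabs (fst (dd 0)) + Rabs (snd (dd 0)) + 2 * (2 * (1 + (Ef 0 + 2 / 3 * M)) * M)))
       + (Ef 0 + 2 / 3 * M)) * gL s.
Proof.
  intros Hs. assert (Hz := gin s Hs).
  set (C3 := 3 * (Rabs (fst (dd 0)) + Rabs (snd (dd 0)) + 2 * (2 * (1 + (Ef 0 + 2 / 3 * M)) * M))).
  set (C1 := Ef 0 + 2 / 3 * M).
  assert (HC1 := Ef_C1 M HM s Hs). fold C1 in HC1.
  assert (HC3 := expu_bound M HM s Hs). fold C3 in HC3.
  rewrite gL_eq. unfold Ef, uW in HC1, HC3.
  set (z := gamma s) in *. set (v := gamma' s).
  rewrite Cmod_eq.
  assert (HF := induced_bound X' Y' Z' z (hnull z Hz)).
  assert (Hom := omega_mod W X' z). assert (Hth := theta_mod W X' Y Y' z).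
  assert (Hgo := dsL_ge_omega W X' Y Y' z). assert (Hgt := dsL_ge_theta W X' Y Y' z).
  assert (HY : Cmod (Y z) < 1 / 3) by (rewrite <- Cmod_eq; apply hYb; auto).
  set (u := fst (W z)) in *.
  set (rL := dsL_density W X' Y Y' z) in *.
  assert (He : 0 < exp u) by apply exp_pos.
  assert (H2u : exp (2 * u) = exp u * exp u) by (rewrite <- exp_plus; f_equal; ring).
  assert (Hm : exp (-2 * u) * exp (2 * u) = 1) by (rewrite <- exp_plus; replace (-2 * u + 2 * u) with 0 by ring; apply exp_0).
  assert (Hm0 : 0 < exp (-2 * u)) by apply exp_pos.
  assert (HX' : Cmod (X' z) <= C3 * C3 * rL).
  { replace (Cmod (X' z)) with (exp (2 * u) * (exp (-2 * u) * Cmod (X' z))).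
    - rewrite <- Hom. rewrite H2u. pose proof (Cmod_ge_0 (omega_coef W X' z)).
      apply Rmult_le_compat; try lra. apply Rmult_le_pos; lra. apply Rmult_le_compat; lra.
    - rewrite <- Rmult_assoc, (Rmult_comm (exp (2 * u))), Hm. ring. }
  set (D := Cmod (Y' z - Y z * Y z * X' z)%C) in *.
  assert (HD : D <= C1 * rL).
  { replace D with (exp (-2 * u) * (exp (2 * u) * D)).
    - rewrite <- Hth. pose proof (Cmod_ge_0 (theta_coef W X' Y Y' z)).
      apply Rmult_le_compat; lra.
    - rewrite <- Rmult_assoc, Hm. ring. }
  assert (HY' : Cmod (Y' z) <= D + Cmod (X' z)).
  { replace (Y' z) with ((Y' z - Y z * Y z * X' z) + Y z * Y z * X' z)%C by ring.
    eapply Rle_trans. apply Cmod_triangle. fold D. rewrite !Cmod_mult.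
    pose proof (Cmod_ge_0 (Y z)). pose proof (Cmod_ge_0 (X' z)).
    assert (Cmod (Y z) * Cmod (Y z) <= 1) by nra. nra. }
  pose proof (Cmod_ge_0 v).
  apply Rle_trans with (2 * (Cmod (X' z) + Cmod (Y' z)) * Cmod v).
  - apply Rmult_le_compat_r; auto.
  - replace (2 * (2 * C3 * C3 + C1) * (rL * Cmod v)) with ((2 * (2 * (C3 * C3 * rL) + C1 * rL)) * Cmod v) by ring.
    apply Rmult_le_compat_r; auto. lra.
Qed.

Lemma main_path M (Z' : C -> C)
  (hnull : forall z, in_disk z -> Cadd (Cadd (Cmul (X' z) (X' z)) (Cmul (Y' z) (Y' z))) (Cmul (Z' z) (Z' z)) = C0)
  (hcomp : complete_conformal_metric (induced_density X' Y' Z')) :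
  exists s, 0 <= s < 1 /\ M < RInt gL 0 s.
Proof.
  apply NNPP. intros Hn.
  assert (HM : forall s, 0 <= s < 1 -> RInt gL 0 s <= M).
  { intros s Hs. apply Rnot_lt_le. intros Hlt. apply Hn. exists s. auto. }
  assert (HM0 := M_nonneg M HM).
  set (C3 := 3 * (Rabs (fst (dd 0)) + Rabs (snd (dd 0)) + 2 * (2 * (1 + (Ef 0 + 2 / 3 * M)) * M))).
  set (C1 := Ef 0 + 2 / 3 * M).
  set (Kf := 2 * (2 * C3 * C3 + C1)).
  assert (HC1 : 0 <= C1) by (unfold C1; pose proof (exp_pos (-2 * uW 0)); unfold Ef; lra).
  assert (HKf : 0 <= Kf) by (unfold Kf; nra).
  destruct (hcomp gamma gamma' Hd (Kf * M)) as [s [Hs [pr Hlt]]].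
  rewrite <- RInt_Reals in Hlt.
  assert (Hex := ex_RInt_Reals_1 _ _ _ pr).
  assert (Hle : RInt (fun t => induced_density X' Y' Z' (gamma t) * Defs.Cmod (gamma' t)) 0 s <=
                RInt (fun t => Kf * gL t) 0 s).
  { apply RInt_le; try lra; auto.
    - apply (ex_RInt_scal (V := R_NormedModule) gL 0 s Kf). apply gL_ex; auto.
    - intros x Hx. apply (gF_bound M HM Z' hnull x). lra. }
  rewrite RInt_scalR in Hle by (apply gL_ex; auto).
  assert (Kf * RInt gL 0 s <= Kf * M) by (apply Rmult_le_compat_l; auto).
  lra.
Qed.

End Path.

Lemma main_complete (Z' : C -> C)
  (hnull : forall z, in_disk z -> Cadd (Cadd (Cmul (X' z) (X' z)) (Cmul (Y' z) (Y' z))) (Cmul (Z' z) (Z' z)) = C0)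
  (hcomp : complete_conformal_metric (induced_density X' Y' Z')) :
  complete_conformal_metric (dsL_density W X' Y Y').
Proof.
  intros gamma gamma' Hd M.
  destruct (main_path gamma gamma' Hd M Z' hnull hcomp) as [s [Hs Hlt]].
  exists s. split; auto.
  exists (ex_RInt_Reals_0 _ _ _ (gL_ex gamma gamma' Hd s Hs)).
  rewrite <- RInt_Reals. exact Hlt.
Qed.

End Main.


Import Pilot.Defs.

Theorem proposition2p4
  (X Y Z X' Y' Z' W W' : Cpx -> Cpx)
  (* F = (X,Y,Z) holomorphic on D_1, with derivatives X', Y', Z' *)
  (hX : holo_on_disk X X') (hY : holo_on_disk Y Y') (hZ : holo_on_disk Z Z')
  (* bounded *)
  (hbdd : exists B : R, forall z, in_disk z ->
            Cmod (X z) <= B /\ Cmod (Y z) <= B /\ Cmod (Z z) <= B)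
  (* null: F_z . F_z = 0 *)
  (hnull : forall z, in_disk z ->
     Cadd (Cadd (Cmul (X' z) (X' z)) (Cmul (Y' z) (Y' z))) (Cmul (Z' z) (Z' z)) = C0)
  (* immersion: F_z never vanishes *)
  (himm : forall z, in_disk z -> (X' z, Y' z, Z' z) <> (C0, C0, C0))
  (* complete induced metric *)
  (hcomp : complete_conformal_metric (induced_density X' Y' Z'))
  (* 1 < |X| < 2 and |Y| < 1/3 on D_1 *)
  (hXb : forall z, in_disk z -> 1 < Cmod (X z) < 2)
  (hYb : forall z, in_disk z -> Cmod (Y z) < 1/3)
  (* W(z) = - int_0^z Y dX : the holomorphic primitive of -Y X' vanishing at 0 *)
  (hW : holo_on_disk W W')
  (hW' : forall z, in_disk z -> W' z = Copp (Cmul (Y z) (X' z)))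
  (hW0 : W C0 = C0) :
  complete_conformal_metric (dsL_density W X' Y Y').
Proof.
  eapply (main_complete X Y X' Y' W W'); eauto.
Qed.
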